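(* Assume $\mu_1=\mu_2=\mu_3=1$ and fix decision points. (i) If $\mathcal P$ is finite, then the triangle process has finitely many periodic orbits and every trajectory, from any starting point, converges onto one of them. (ii) (Whether or not $\mathcal P$ is finite.) If $z\notin\overline{\mathcal P}$ and the trajectory starting at $z$ converges onto the periodic orbit $u_1,\dots,u_m$, then there is $\varepsilon>0$ such that from every $z'\in\mathcal N_\varepsilon(z)$ there is a unique trajectory, and it converges onto this orbit. (iii) Any periodic orbit $u_1,\dots,u_m$ with $u_n\notin\overline{\mathcal P}$ for every $n$ is stable.
   Context: Fix $\rho_1,\rho_2,\rho_3\in(0,1)$ with $\rho_1+\rho_2+\rho_3>1$, $\mu_i=1$, $\theta:=\rho_1+\rho_2+\rho_3-1$. $A_i^0:=\{y\in\mathbb R^3: y_1+y_2+y_3=1, y_i=0, y_l\ge0\}$, $A^0:=\bigcup_iA_i^0$; for $z\in A^0\setminus A_j^0$, $f_j(z):=\sum_{i\neq j}\frac{(1-\rho_j)z_i+\rho_i z_j}{(1-\rho_j)+\theta z_j}e_i$. For $(\hat i,\hat j,\hat k)$ equal to $(1,2,3)$ or a cyclic permutation, $(1-x)e_{\hat j}+xe_{\hat k}\in A^0_{\hat i}$ is written $(x,\hat i)$, $\pi((x,\hat i)):=x$. $|z-z'|_1:=\|z-z'\|/\sqrt2$. Decision points $d_1,d_2,d_3\in(0,1)$ (identified with $(d_{\hat i},\hat i)$); switching rule $\mathfrak R((x,\hat i))=\hat j$ if $x<d_{\hat i}$, $\hat k$ if $x>d_{\hat i}$, both allowed if $x=d_{\hat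 i}$; $\varphi(z):=f_{\mathfrak R(z)}(z)$. A trajectory is $(z(t))_{t\ge0}$ with $z(t+1)\in\varphi(z(t))$. $z$ is a pre-image of $z'$ if some trajectory from $z$ has $z(t)=z'$ for some $t\ge1$. $\mathcal P$ is the set consisting of the decision points and all their pre-images; $\overline{\mathcal P}$ its closure. Periodic orbit: $u_1,\dots,u_m$ with $u_{n+1}\in\varphi(u_n)$, $u_1\in\varphi(u_m)$. A trajectory converges onto it if there is $n_0$ with $|z(mt+n+n_0)-u_n|_1\to0$ ($t\to\infty$) for each $n$. For $z=(x,\hat i)$, $\mathcal N_\varepsilon(z):=\{z'\in A^0_{\hat i}:|\pi(z')-x|<\varepsilon\}$. An orbit is stable if for each $n$ there is $\varepsilon>0$ such that all trajectories from any $z\in\mathcal N_\varepsilon(u_n)$ converge onto the orbit. *)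

(* Defs.v *)
From Stdlib Require Import Reals Lra List.
Open Scope R_scope.

Inductive idx := I1 | I2 | I3.

Definition idx_eq_dec (i j : idx) : {i = j} + {i <> j}.
Proof. decide equality. Defined.

Definition pt := idx -> R.

Definition succ (i : idx) : idx :=
  match i with I1 => I2 | I2 => I3 | I3 => I1 end.

Definition theta (rho : idx -> R) : R := rho I1 + rho I2 + rho I3 - 1.

Definition InA (i : idx) (z : pt) : Prop :=
  z I1 + z I2 + z I3 = 1 /\ z i = 0 /\ (forall l, 0 <= z l).
Definition InA0 (z : pt) : Prop := exists i, InA i z.

(* f_j (mu_i = 1) *)
Definition f (rho : idx -> R) (j : idx) (z : pt) : pt :=
  fun i => if idx_eq_dec i j then 0
           else ((1 - rho j) * z i + rho i * z j) / ((1 - rho j) + theta rho * z j).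

(* (x, i) := (1-x) e_{succ i} + x e_{succ (succ i)} in A_i^0 *)
Definition param (x : R) (i : idx) : pt :=
  fun l => if idx_eq_dec l (succ i) then 1 - x
           else if idx_eq_dec l (succ (succ i)) then x else 0.

Definition Rep (z : pt) (x : R) (i : idx) : Prop :=
  0 <= x <= 1 /\ z = param x i.

Definition Rule (d : idx -> R) (z : pt) (j : idx) : Prop :=
  exists i x, Rep z x i /\
    ((x < d i /\ j = succ i) \/ (x > d i /\ j = succ (succ i)) \/
     (x = d i /\ (j = succ i \/ j = succ (succ i)))).

Definition Step (rho d : idx -> R) (z z' : pt) : Prop :=
  exists j, Rule d z j /\ ~ InA j z /\ z' = f rho j z.

Definition Trajectory (rho d : idx -> R) (tr : nat -> pt) : Prop :=
  forall t, Step rho d (tr t) (tr (S t)).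

Definition dist1 (z z' : pt) : R :=
  sqrt ((z I1 - z' I1)^2 + (z I2 - z' I2)^2 + (z I3 - z' I3)^2) / sqrt 2.

Definition DecisionPoint (d : idx -> R) (z : pt) : Prop :=
  exists i, z = param (d i) i.

Definition Preimage (rho d : idx -> R) (z z' : pt) : Prop :=
  exists tr, Trajectory rho d tr /\ tr O = z /\
    exists t, (1 <= t)%nat /\ tr t = z'.

Definition InP (rho d : idx -> R) (z : pt) : Prop :=
  DecisionPoint d z \/ exists p, DecisionPoint d p /\ Preimage rho d z p.

Definition FiniteP (rho d : idx -> R) : Prop :=
  exists L : list pt, forall z, InP rho d z -> In z L.

Definition InClosureP (rho d : idx -> R) (z : pt) : Prop :=
  forall eps, 0 < eps -> exists p, InP rho d p /\ dist1 z p < eps.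

(* periodic orbit u_0, ..., u_{m-1} (0-based indexing of u_1..u_m) *)
Definition PeriodicOrbit (rho d : idx -> R) (m : nat) (u : nat -> pt) : Prop :=
  (1 <= m)%nat /\
  (forall n, (S n < m)%nat -> Step rho d (u n) (u (S n))) /\
  Step rho d (u (m - 1)%nat) (u O).

Definition ConvergesOnto (tr : nat -> pt) (m : nat) (u : nat -> pt) : Prop :=
  exists n0 : nat, forall n, (n < m)%nat ->
    Un_cv (fun t => dist1 (tr (m * t + n + n0)%nat) (u n)) 0.

(* z' ∈ N_eps(z) (for any way of writing z = (x, i)) *)
Definition Nbhd (eps : R) (z z' : pt) : Prop :=
  exists i x x', Rep z x i /\ Rep z' x' i /\ Rabs (x' - x) < eps.

Definition Stable (rho d : idx -> R) (m : nat) (u : nat -> pt) : Prop :=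
  forall n, (n < m)%nat -> exists eps, 0 < eps /\
    forall z tr, Nbhd eps (u n) z -> Trajectory rho d tr -> tr O = z ->
      ConvergesOnto tr m u.

(* Main.v *)
Require Import Defs.
From Stdlib Require Import Reals List.
Open Scope R_scope.
From Stdlib Require Import Lra Psatz FunctionalExtensionality Classical ClassicalEpsilon Arith.
Import Defs.
Open Scope R_scope.

Lemma div_lt a b c : 0 < b -> a < c * b -> a / b < c.
Proof. intros Hb H. apply Rmult_lt_reg_r with b; auto. unfold Rdiv. rewrite Rmult_assoc, Rinv_l; lra. Qed.
Lemma div_le a b c : 0 < b -> a <= c * b -> a / b <= c.
Proof. intros Hb H. apply Rmult_le_reg_r with b; auto. unfold Rdiv. rewrite Rmult_assoc, Rinv_l; lra. Qed.
Lemma div_gt a b c : 0 < b -> c * b < a -> c < a / b.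
Proof. intros Hb H. apply Rmult_lt_reg_r with b; auto. unfold Rdiv. rewrite Rmult_assoc, Rinv_l; lra. Qed.
Lemma div_ge a b c : 0 < b -> c * b <= a -> c <= a / b.
Proof. intros Hb H. apply Rmult_le_reg_r with b; auto. unfold Rdiv. rewrite Rmult_assoc, Rinv_l; lra. Qed.

Lemma Rdiv_le_0_compat a b : 0 <= a -> 0 < b -> 0 <= a / b.
Proof. intros; apply div_ge; lra. Qed.

Definition th (ri rj rk : R) := ri + rj + rk - 1.
Definition phiL ri rj rk x := ri * (1 - x) / ((1 - rj) + th ri rj rk * (1 - x)).
Definition phiR ri rj rk x := ((1 - rj) * (1 - x) + rk * x) / ((1 - rj) + th ri rj rk * x).
Definition Ex a b := (a - b)^2 / (a * (1 - a) * (b * (1 - b))).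

Definition betw a b x := (a <= x <= b) \/ (b <= x <= a).

Lemma betw_surj (g : R -> R) :
  (forall a b, 0 <= a -> a < b -> b <= 1 -> g b < g a) ->
  (forall y, g 1 <= y <= g 0 -> exists x, 0 <= x <= 1 /\ g x = y) ->
  forall a b y, 0 <= a <= 1 -> 0 <= b <= 1 -> betw (g a) (g b) y ->
  exists x, betw a b x /\ g x = y.
Proof.
  intros Hdec Hinv.
  assert (Hmono : forall a b, 0 <= a -> a <= b -> b <= 1 -> g b <= g a).
  { intros a b H1 H2 H3. destruct (Req_dec a b). subst; lra.
    apply Rlt_le, Hdec; lra. }
  intros a b y Ha Hb Hy.
  assert (Hr : g 1 <= y <= g 0).
  { pose proof (Hmono a 1 ltac:(lra) ltac:(lra) ltac:(lra)).
    pose proof (Hmono 0 a ltac:(lra) ltac:(lra) ltac:(lra)).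
    pose proof (Hmono b 1 ltac:(lra) ltac:(lra) ltac:(lra)).
    pose proof (Hmono 0 b ltac:(lra) ltac:(lra) ltac:(lra)).
    unfold betw in Hy; lra. }
  destruct (Hinv y Hr) as [x [Hx Hgx]]. exists x; split; auto.
  unfold betw in *.
  destruct (Rle_dec a b).
  - left. split.
    + destruct (Rle_dec a x); auto. exfalso.
      pose proof (Hdec x a ltac:(lra) ltac:(lra) ltac:(lra)).
      pose proof (Hmono a b ltac:(lra) ltac:(lra) ltac:(lra)). lra.
    + destruct (Rle_dec x b); auto. exfalso.
      pose proof (Hdec b x ltac:(lra) ltac:(lra) ltac:(lra)).
      pose proof (Hmono a b ltac:(lra) ltac:(lra) ltac:(lra)). lra.
  - right. split.
    + destruct (Rle_dec b x); auto. exfalso.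
      pose proof (Hdec x b ltac:(lra) ltac:(lra) ltac:(lra)).
      pose proof (Hmono b a ltac:(lra) ltac:(lra) ltac:(lra)). lra.
    + destruct (Rle_dec x a); auto. exfalso.
      pose proof (Hdec a x ltac:(lra) ltac:(lra) ltac:(lra)).
      pose proof (Hmono b a ltac:(lra) ltac:(lra) ltac:(lra)). lra.
Qed.

Section G.
Variables ri rj rk : R.
Hypothesis Hi : 0 < ri < 1.
Hypothesis Hj : 0 < rj < 1.
Hypothesis Hk : 0 < rk < 1.
Hypothesis Hs : ri + rj + rk > 1.

Lemma DL_pos x : 0 <= x <= 1 -> 0 < (1 - rj) + th ri rj rk * (1 - x).
Proof. intros; unfold th; nra. Qed.
Lemma DR_pos x : 0 <= x <= 1 -> 0 < (1 - rj) + th ri rj rk * x.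
Proof. intros; unfold th; nra. Qed.
Lemma DL_ge x : 0 <= x <= 1 -> 1 - rj <= (1 - rj) + th ri rj rk * (1 - x).
Proof. intros; unfold th; nra. Qed.
Lemma DR_ge x : 0 <= x <= 1 -> 1 - rj <= (1 - rj) + th ri rj rk * x.
Proof. intros; unfold th; nra. Qed.

Lemma phiL_range x : 0 <= x < 1 -> 0 < phiL ri rj rk x < 1.
Proof.
  intros Hx. pose proof (DL_pos x ltac:(lra)). unfold phiL in *.
  split.
  - apply Rdiv_lt_0_compat; nra.
  - apply div_lt; [lra|]. unfold th in *; nra.
Qed.
Lemma phiR_range x : 0 < x <= 1 -> 0 < phiR ri rj rk x < 1.
Proof.
  intros Hx. pose proof (DR_pos x ltac:(lra)). unfold phiR in *.
  split.
  - apply Rdiv_lt_0_compat; nra.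
  - apply div_lt; [lra|]. unfold th in *; nra.
Qed.

Lemma phiL_diff a b : 0 <= a <= 1 -> 0 <= b <= 1 ->
  phiL ri rj rk a - phiL ri rj rk b =
  (b - a) * (ri * (1 - rj)) / (((1 - rj) + th ri rj rk * (1 - a)) * ((1 - rj) + th ri rj rk * (1 - b))).
Proof.
  intros Ha Hb. pose proof (DL_pos a Ha). pose proof (DL_pos b Hb).
  unfold phiL. field. lra.
Qed.
Lemma phiR_diff a b : 0 <= a <= 1 -> 0 <= b <= 1 ->
  phiR ri rj rk a - phiR ri rj rk b =
  (b - a) * (ri * (1 - rj)) / (((1 - rj) + th ri rj rk * a) * ((1 - rj) + th ri rj rk * b)).
Proof.
  intros Ha Hb. pose proof (DR_pos a Ha). pose proof (DR_pos b Hb).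
  unfold phiR, th in *. field. lra.
Qed.

Lemma diff_bound (a b D1 D2 c : R) : 0 < c -> c <= D1 -> c <= D2 ->
  Rabs ((b - a) * (ri * c) / (D1 * D2)) <= ri / c * Rabs (a - b).
Proof.
  intros Hc H1 H2.
  set (q := ri * c / (D1 * D2)).
  assert (Hq0 : 0 <= q) by (apply Rdiv_le_0_compat; nra).
  assert (Hq1 : q <= ri / c).
  { unfold q. apply div_le; [nra|].
    replace (ri / c * (D1 * D2)) with (ri * (D1 / c) * D2) by (field; lra).
    assert (1 <= D1 / c) by (apply div_ge; lra).
    assert (ri * c <= ri * D2) by nra.
    assert (ri * D2 <= ri * (D1 / c) * D2).
    { rewrite (Rmult_comm ri (D1/c)), Rmult_assoc. rewrite <- (Rmult_1_l (ri * D2)) at 1.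
      apply Rmult_le_compat_r; nra. }
    lra. }
  replace ((b - a) * (ri * c) / (D1 * D2)) with ((b - a) * q) by (unfold q; field; nra).
  rewrite Rabs_mult, (Rabs_pos_eq q) by lra.
  rewrite <- Rabs_Ropp, Ropp_minus_distr.
  pose proof (Rabs_pos (a - b)). nra.
Qed.

Lemma phiL_lip a b : 0 <= a <= 1 -> 0 <= b <= 1 ->
  Rabs (phiL ri rj rk a - phiL ri rj rk b) <= ri / (1 - rj) * Rabs (a - b).
Proof.
  intros Ha Hb. rewrite phiL_diff by auto.
  apply diff_bound; [lra| apply DL_ge | apply DL_ge]; auto.
Qed.
Lemma phiR_lip a b : 0 <= a <= 1 -> 0 <= b <= 1 ->
  Rabs (phiR ri rj rk a - phiR ri rj rk b) <= ri / (1 - rj) * Rabs (a - b).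
Proof.
  intros Ha Hb. rewrite phiR_diff by auto.
  apply diff_bound; [lra| apply DR_ge | apply DR_ge]; auto.
Qed.

Lemma phiL_dec a b : 0 <= a -> a < b -> b <= 1 -> phiL ri rj rk b < phiL ri rj rk a.
Proof.
  intros. pose proof (phiL_diff a b ltac:(lra) ltac:(lra)).
  pose proof (DL_pos a ltac:(lra)). pose proof (DL_pos b ltac:(lra)).
  assert (0 < (b - a) * (ri * (1 - rj)) / (((1 - rj) + th ri rj rk * (1 - a)) * ((1 - rj) + th ri rj rk * (1 - b)))).
  { apply Rdiv_lt_0_compat; repeat apply Rmult_lt_0_compat; lra. }
  lra.
Qed.
Lemma phiR_dec a b : 0 <= a -> a < b -> b <= 1 -> phiR ri rj rk b < phiR ri rj rk a.
Proof.
  intros. pose proof (phiR_diff a b ltac:(lra) ltac:(lra)).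
  pose proof (DR_pos a ltac:(lra)). pose proof (DR_pos b ltac:(lra)).
  assert (0 < (b - a) * (ri * (1 - rj)) / (((1 - rj) + th ri rj rk * a) * ((1 - rj) + th ri rj rk * b))).
  { apply Rdiv_lt_0_compat; repeat apply Rmult_lt_0_compat; lra. }
  lra.
Qed.

Lemma phiL_inv y : phiL ri rj rk 1 <= y <= phiL ri rj rk 0 ->
  exists x, 0 <= x <= 1 /\ phiL ri rj rk x = y.
Proof.
  intros Hy. unfold phiL in Hy. unfold th in *.
  replace (ri * (1 - 1) / (1 - rj + (ri + rj + rk - 1) * (1 - 1))) with 0 in Hy by (field; lra).
  replace (ri * (1 - 0) / (1 - rj + (ri + rj + rk - 1) * (1 - 0))) with (ri / (ri + rk)) in Hy by (field; lra).
  assert (Hy2 : y * (ri + rk) <= ri).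
  { destruct Hy as [_ Hy]. apply Rmult_le_reg_r with (/ (ri + rk)).
    apply Rinv_0_lt_compat; lra. rewrite Rmult_assoc, Rinv_r by lra. lra. }
  assert (Hden : 0 < ri - (ri + rj + rk - 1) * y) by nra.
  exists (1 - y * (1 - rj) / (ri - (ri + rj + rk - 1) * y)).
  assert (0 <= y * (1 - rj) / (ri - (ri + rj + rk - 1) * y)) by (apply Rdiv_le_0_compat; nra).
  assert (y * (1 - rj) / (ri - (ri + rj + rk - 1) * y) <= 1) by (apply div_le; nra).
  split; [lra|]. unfold phiL, th. field. split; [lra|]. nra.
Qed.

Lemma phiR_inv y : phiR ri rj rk 1 <= y <= phiR ri rj rk 0 ->
  exists x, 0 <= x <= 1 /\ phiR ri rj rk x = y.
Proof.
  intros Hy. unfold phiR in Hy. unfold th in *.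
  replace (((1 - rj) * (1 - 1) + rk * 1) / (1 - rj + (ri + rj + rk - 1) * 1)) with (rk / (ri + rk)) in Hy by (field; lra).
  replace (((1 - rj) * (1 - 0) + rk * 0) / (1 - rj + (ri + rj + rk - 1) * 0)) with 1 in Hy by (field; lra).
  assert (Hy2 : rk <= y * (ri + rk)).
  { destruct Hy as [Hy _]. apply Rmult_le_reg_r with (/ (ri + rk)).
    apply Rinv_0_lt_compat; lra. rewrite Rmult_assoc, Rinv_r by lra. lra. }
  assert (Hden : 0 < y * (ri + rj + rk - 1) + (1 - rj) - rk) by nra.
  exists ((1 - rj) * (1 - y) / (y * (ri + rj + rk - 1) + (1 - rj) - rk)).
  assert (0 <= (1 - rj) * (1 - y) / (y * (ri + rj + rk - 1) + (1 - rj) - rk)) by (apply Rdiv_le_0_compat; nra).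
  assert ((1 - rj) * (1 - y) / (y * (ri + rj + rk - 1) + (1 - rj) - rk) <= 1) by (apply div_le; nra).
  split; [lra|]. unfold phiR, th. field. split; [lra|].
  apply Rgt_not_eq.
  assert (0 < (1 - rj) * (y * (ri + rj + rk - 1) + (1 - rj) - rk)) by (apply Rmult_lt_0_compat; lra).
  assert (0 <= (ri + rj + rk - 1) * ((1 - rj) * (1 - y))) by (apply Rmult_le_pos; [lra| apply Rmult_le_pos; lra]).
  lra.
Qed.

Lemma phiL_betw a b y : 0 <= a <= 1 -> 0 <= b <= 1 ->
  betw (phiL ri rj rk a) (phiL ri rj rk b) y -> exists x, betw a b x /\ phiL ri rj rk x = y.
Proof.
  apply betw_surj. apply phiL_dec. apply phiL_inv.
Qed.
Lemma phiR_betw a b y : 0 <= a <= 1 -> 0 <= b <= 1 ->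
  betw (phiR ri rj rk a) (phiR ri rj rk b) y -> exists x, betw a b x /\ phiR ri rj rk x = y.
Proof.
  apply betw_surj. apply phiR_dec. apply phiR_inv.
Qed.

End G.


Definition FL rj rk x := (1 - rj) * x / ((1 - rj) * x + rk * (1 - x)).
Definition FR rj rk x := (1 - rj) * (1 - x) / ((1 - rj) * (1 - x) + rk * x).

Section G3.
Variables ri rj rk : R.
Hypothesis Hi : 0 < ri < 1.
Hypothesis Hj : 0 < rj < 1.
Hypothesis Hk : 0 < rk < 1.
Hypothesis Hs : ri + rj + rk > 1.

Lemma phiL_contr a b : 0 < a < 1 -> 0 < b < 1 ->
  Ex (phiL ri rj rk a) (phiL ri rj rk b) = Ex a b * FL rj rk a * FL rj rk b.
Proof.
  intros Ha Hb. assert (0 < (1 - rj) + th ri rj rk * (1 - a)) by (unfold th; nra).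
  assert (0 < (1 - rj) + th ri rj rk * (1 - b)) by (unfold th; nra).
  assert (0 < (1 - rj) * a + rk * (1 - a)) by nra.
  assert (0 < (1 - rj) * b + rk * (1 - b)) by nra.
  unfold Ex, FL, phiL, th in *. field.
  repeat split; try lra; nra.
Qed.

Lemma phiR_contr a b : 0 < a < 1 -> 0 < b < 1 ->
  Ex (phiR ri rj rk a) (phiR ri rj rk b) = Ex a b * FR rj rk a * FR rj rk b.
Proof.
  intros Ha Hb. assert (0 < (1 - rj) + th ri rj rk * a) by (unfold th; nra).
  assert (0 < (1 - rj) + th ri rj rk * b) by (unfold th; nra).
  assert (0 < (1 - rj) * (1 - a) + rk * a) by nra.
  assert (0 < (1 - rj) * (1 - b) + rk * b) by nra.
  unfold Ex, FR, phiR, th in *. field.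
  repeat split; try lra; nra.
Qed.
End G3.

Lemma Ex_nonneg a b : 0 < a < 1 -> 0 < b < 1 -> 0 <= Ex a b.
Proof.
  intros. unfold Ex. apply Rdiv_le_0_compat. apply pow2_ge_0.
  apply Rmult_lt_0_compat; apply Rmult_lt_0_compat; lra.
Qed.

Lemma Ex_ge a b : 0 < a < 1 -> 0 < b < 1 -> (a - b)^2 <= Ex a b.
Proof.
  intros. unfold Ex. apply div_ge. apply Rmult_lt_0_compat; apply Rmult_lt_0_compat; lra.
  assert (0 <= (a-b)^2) by apply pow2_ge_0.
  assert (0 < a * (1 - a) <= 1) by (split; nra).
  assert (0 < b * (1 - b) <= 1) by (split; nra).
  assert (a * (1 - a) * (b * (1 - b)) <= 1).
  { rewrite <- (Rmult_1_l 1). apply Rmult_le_compat; lra. }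
  rewrite <- (Rmult_1_r ((a-b)^2)) at 2. apply Rmult_le_compat_l; lra.
Qed.

Lemma F_le c rk x t eta : 0 < c <= 1 -> 0 < rk -> 0 < x -> 0 < t ->
   0 < eta -> c * x * eta <= rk * t ->
   0 <= c * x / (c * x + rk * t) <= 1 / (1 + eta).
Proof.
  intros. split.
  - apply Rdiv_le_0_compat; nra.
  - apply div_le; [nra|].
    replace (1 / (1 + eta) * (c * x + rk * t)) with ((c * x + rk * t) / (1 + eta)) by (field; lra).
    apply div_ge; nra.
Qed.

Lemma FL_le rj rk x dd eta : 0 < rj < 1 -> 0 < rk -> 0 < x <= dd -> dd < 1 ->
  0 < eta <= rk * (1 - dd) -> 0 <= FL rj rk x <= 1 / (1 + eta).
Proof.
  intros. unfold FL. apply F_le; try lra.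
  assert (0 < (1 - rj) * x <= 1) by (split; nra).
  assert ((1 - rj) * x * eta <= eta) by nra.
  assert (rk * (1 - dd) <= rk * (1 - x)) by nra. lra.
Qed.

Lemma FR_le rj rk x dd eta : 0 < rj < 1 -> 0 < rk -> 0 < dd <= x -> x < 1 ->
  0 < eta <= rk * dd -> 0 <= FR rj rk x <= 1 / (1 + eta).
Proof.
  intros. unfold FR. apply F_le; try lra.
  assert (0 < (1 - rj) * (1 - x) <= 1) by (split; nra).
  assert ((1 - rj) * (1 - x) * eta <= eta) by nra.
  assert (rk * dd <= rk * x) by nra. lra.
Qed.

Lemma prod_bound E f1 f2 k : 0 <= E -> 0 <= f1 <= k -> 0 <= f2 <= k ->
  E * f1 * f2 <= E * (k * k).
Proof. intros. rewrite Rmult_assoc. apply Rmult_le_compat_l; auto. apply Rmult_le_compat; lra. Qed.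


Definition ss i := succ (succ i).
Definition nphi (rho : idx -> R) i (s : bool) x :=
  if s then phiL (rho i) (rho (succ i)) (rho (ss i)) x
  else phiR (rho i) (rho (ss i)) (rho (succ i)) x.
Definition tgt i (s : bool) := if s then succ i else ss i.
Definition sideok (d : idx -> R) i (s : bool) x := if s then x <= d i else d i <= x.

Section H.
Variables rho d : idx -> R.
Hypothesis Hrho : forall i, 0 < rho i < 1.
Hypothesis Hsum : rho I1 + rho I2 + rho I3 > 1.
Hypothesis Hd : forall i, 0 < d i < 1.

Lemma f_param x i s : 0 <= x <= 1 ->
  f rho (tgt i s) (param x i) = param (nphi rho i s x) (tgt i s).
Proof.
  intros Hx. pose proof (Hrho I1). pose proof (Hrho I2). pose proof (Hrho I3).
  apply functional_extensionality; intros l.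
  destruct i, s, l; unfold f, param, nphi, tgt, ss, phiL, phiR, theta, th; simpl;
   try field; try lra; nra.
Qed.
End H.


Lemma param_inj a i x i' : 0 <= a <= 1 -> 0 <= x <= 1 -> param a i = param x i' ->
  (i' = i /\ x = a) \/ (a = 0 /\ i' = ss i /\ x = 1) \/ (a = 1 /\ i' = succ i /\ x = 0).
Proof.
  intros Ha Hx H.
  pose proof (equal_f H I1) as H1. pose proof (equal_f H I2) as H2. pose proof (equal_f H I3) as H3.
  destruct i, i'; unfold param, ss in *; simpl in *;
  first [ left; split; [reflexivity| lra]
        | right; left; split; [lra| split; [reflexivity|lra]]
        | right; right; split; [lra| split; [reflexivity|lra]]
        | exfalso; lra ].
Qed.

Lemma succ_ss i : succ (ss i) = i.
Proof. destruct i; reflexivity. Qed.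
Lemma ss_ss i : ss (ss i) = succ i.
Proof. destruct i; reflexivity. Qed.

Lemma sum_permL (rho : idx -> R) i : rho i + rho (succ i) + rho (ss i) = rho I1 + rho I2 + rho I3.
Proof. destruct i; simpl; unfold ss; simpl; ring. Qed.
Lemma sum_permR (rho : idx -> R) i : rho i + rho (ss i) + rho (succ i) = rho I1 + rho I2 + rho I3.
Proof. destruct i; simpl; unfold ss; simpl; ring. Qed.

Section H2.
Variables rho d : idx -> R.
Hypothesis Hrho : forall i, 0 < rho i < 1.
Hypothesis Hsum : rho I1 + rho I2 + rho I3 > 1.
Hypothesis Hd : forall i, 0 < d i < 1.

Lemma step_src z z' : Step rho d z z' -> exists a i, 0 <= a <= 1 /\ z = param a i.
Proof.
  intros [j [HR _]]. destruct HR as [i [x [[Hx Hz] _]]]. exists x, i; auto.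
Qed.

Lemma step_char a i w : 0 <= a <= 1 -> Step rho d (param a i) w ->
  exists s, sideok d i s a /\ w = param (nphi rho i s a) (tgt i s).
Proof.
  intros Ha [j [HR [_ Hw]]]. destruct HR as [i0 [x0 [[Hx0 Hz] Hr]]].
  pose proof (Hd i0) as Hd0. pose proof (Hd i).
  destruct (param_inj a i x0 i0 Ha Hx0 Hz) as [[-> ->]|[[-> [-> ->]]|[-> [-> ->]]]].
  - destruct Hr as [[Hlt ->]|[[Hgt ->]|[Heq [-> | ->]]]].
    + exists true. split; simpl; [lra|]. rewrite Hw. apply (f_param rho Hrho Hsum a i true Ha).
    + exists false. split; simpl; [lra|]. rewrite Hw. apply (f_param rho Hrho Hsum a i false Ha).
    + exists true. split; simpl; [lra|]. rewrite Hw. apply (f_param rho Hrho Hsum a i true Ha).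
    + exists false. split; simpl; [lra|]. rewrite Hw. apply (f_param rho Hrho Hsum a i false Ha).
  - destruct Hr as [[Hlt ->]|[[Hgt ->]|[Heq _]]]; try lra.
    exists true. split; simpl; [lra|]. rewrite Hw.
    replace (succ (succ (ss i))) with (tgt i true) by (destruct i; reflexivity).
    apply (f_param rho Hrho Hsum 0 i true Ha).
  - destruct Hr as [[Hlt ->]|[[Hgt ->]|[Heq _]]]; try lra.
    exists false. split; simpl; [lra|]. rewrite Hw.
    replace (succ (succ i)) with (tgt i false) by (destruct i; reflexivity).
    apply (f_param rho Hrho Hsum 1 i false Ha).
Qed.

Lemma step_exists a i s : 0 <= a <= 1 -> sideok d i s a ->
  Step rho d (param a i) (param (nphi rho i s a) (tgt i s)).
Proof.
  intros Ha Hs. pose proof (Hd i).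
  exists (tgt i s). split; [|split].
  - exists i, a. split; [split; auto|].
    destruct s; simpl in Hs; simpl.
    + destruct (Rtotal_order a (d i)) as [Hl|[He|Hg]]; [left; auto| right; right; auto | lra].
    + destruct (Rtotal_order a (d i)) as [Hl|[He|Hg]]; [lra| right; right; auto | right; left; auto].
  - intros [_ [H0 _]]. destruct s, i; unfold param, tgt, ss in *; simpl in *; lra.
  - symmetry. apply f_param; auto.
Qed.

Lemma nphi_range a i s : 0 <= a <= 1 -> sideok d i s a -> 0 < nphi rho i s a < 1.
Proof.
  intros Ha Hs. pose proof (Hd i).
  pose proof (sum_permL rho i). pose proof (sum_permR rho i).
  destruct s; simpl in *; [apply phiL_range | apply phiR_range]; try apply Hrho; lra.
Qed.

Lemma step_tgt z z' : Step rho d z z' -> exists y j, 0 < y < 1 /\ z' = param y j.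
Proof.
  intros H. destruct (step_src z z' H) as [a [i [Ha ->]]].
  destruct (step_char a i z' Ha H) as [s [Hs ->]].
  exists (nphi rho i s a), (tgt i s). split; auto. apply nphi_range; auto.
Qed.

End H2.


Section H3.
Variables rho d : idx -> R.
Hypothesis Hrho : forall i, 0 < rho i < 1.
Hypothesis Hsum : rho I1 + rho I2 + rho I3 > 1.
Hypothesis Hd : forall i, 0 < d i < 1.

Fixpoint st (i : idx) (a : R) (n : nat) : idx * R :=
  match n with
  | O => (i, a)
  | S n => let (e, x) := st i a n in
           if Rle_dec x (d e) then (tgt e true, nphi rho e true x)
           else (tgt e false, nphi rho e false x)
  end.

Lemma st_range i a n : 0 <= a <= 1 -> 0 <= snd (st i a n) <= 1.
Proof.
  intros Ha. induction n; simpl; auto.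
  destruct (st i a n) as [e x]. simpl in IHn.
  destruct (Rle_dec x (d e)).
  - cbn [snd]. pose proof (nphi_range rho d Hrho Hsum Hd x e true IHn r). simpl in H. lra.
  - cbn [snd]. pose proof (nphi_range rho d Hrho Hsum Hd x e false IHn ltac:(simpl; lra)). simpl in H. lra.
Qed.

Lemma traj_exists a i : 0 <= a <= 1 ->
  exists tr, Trajectory rho d tr /\ tr O = param a i.
Proof.
  intros Ha. exists (fun n => param (snd (st i a n)) (fst (st i a n))). split; [|reflexivity].
  intros t. pose proof (st_range i a t Ha) as Hr. cbn [st].
  destruct (st i a t) as [e x]. cbn [fst snd] in *.
  destruct (Rle_dec x (d e)).
  - cbn [fst snd]. apply (step_exists rho d Hrho Hsum Hd x e true); auto.
  - cbn [fst snd]. apply (step_exists rho d Hrho Hsum Hd x e false); auto. simpl; lra.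
Qed.

Lemma traj_from_step z z' : Step rho d z z' -> exists tr, Trajectory rho d tr /\ tr O = z'.
Proof.
  intros H. destruct (step_tgt rho d Hrho Hsum Hd z z' H) as [y [j [Hy ->]]].
  apply traj_exists. lra.
Qed.

Definition cons_tr (z : pt) (tr : nat -> pt) : nat -> pt :=
  fun n => match n with O => z | S n => tr n end.

Lemma cons_traj z tr : Trajectory rho d tr -> Step rho d z (tr O) -> Trajectory rho d (cons_tr z tr).
Proof. intros Ht Hs [|t]; simpl; auto. Qed.

Lemma inP_back z z' : Step rho d z z' -> InP rho d z' -> InP rho d z.
Proof.
  intros Hs [Hdp | [p [Hp [tr [Ht [H0 [t [Ht1 Htp]]]]]]]].
  - destruct (traj_from_step z z' Hs) as [tr [Ht H0]].
    right. exists z'. split; auto.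
    exists (cons_tr z tr). split; [apply cons_traj; auto; rewrite H0; auto|].
    split; [reflexivity|]. exists 1%nat. split; [lia|]. simpl. auto.
  - right. exists p. split; auto.
    exists (cons_tr z tr). split; [apply cons_traj; auto; rewrite H0; auto|].
    split; [reflexivity|]. exists (S t). split; [lia|]. simpl. auto.
Qed.

Lemma inP_traj tr n k : Trajectory rho d tr -> InP rho d (tr (n + k)%nat) -> InP rho d (tr n).
Proof.
  intros Ht. revert n. induction k; intros n H.
  - rewrite Nat.add_0_r in H; auto.
  - apply inP_back with (tr (S n)); auto. apply IHk. replace (S n + k)%nat with (n + S k)%nat by lia. auto.
Qed.

Lemma dp_inP (i : idx) : InP rho d (param (d i) i).
Proof. left. exists i. reflexivity. Qed.

End H3.


Definition NoPB rho d i a b := forall x, betw a b x -> ~ InP rho d (param x i).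

Lemma betw_l a b : betw a b a.
Proof. unfold betw; destruct (Rle_dec a b); [left|right]; lra. Qed.
Lemma betw_r a b : betw a b b.
Proof. unfold betw; destruct (Rle_dec a b); [left|right]; lra. Qed.

Section C.
Variables rho d : idx -> R.
Hypothesis Hrho : forall i, 0 < rho i < 1.
Hypothesis Hsum : rho I1 + rho I2 + rho I3 > 1.
Hypothesis Hd : forall i, 0 < d i < 1.

Lemma nphi_betw i s a b y : 0 <= a <= 1 -> 0 <= b <= 1 ->
  betw (nphi rho i s a) (nphi rho i s b) y -> exists x, betw a b x /\ nphi rho i s x = y.
Proof.
  pose proof (sum_permL rho i). pose proof (sum_permR rho i).
  destruct s; simpl; [apply phiL_betw | apply phiR_betw]; try apply Hrho; lra.
Qed.

Lemma core_step i a b z' w' : 0 <= a <= 1 -> 0 <= b <= 1 -> NoPB rho d i a b ->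
  Step rho d (param a i) z' -> Step rho d (param b i) w' ->
  exists s, sideok d i s a /\ sideok d i s b /\ a <> d i /\ b <> d i /\
    z' = param (nphi rho i s a) (tgt i s) /\ w' = param (nphi rho i s b) (tgt i s) /\
    NoPB rho d (tgt i s) (nphi rho i s a) (nphi rho i s b).
Proof.
  intros Ha Hb HN Hz Hw.
  assert (Had : a <> d i).
  { intros E. apply (HN a (betw_l a b)). rewrite E. apply dp_inP. }
  assert (Hbd : b <> d i).
  { intros E. apply (HN b (betw_r a b)). rewrite E. apply dp_inP. }
  assert (Hnd : ~ betw a b (d i)).
  { intros Hb'. apply (HN _ Hb'). apply dp_inP. }
  destruct (step_char rho d Hrho Hsum Hd a i z' Ha Hz) as [s1 [Hs1 ->]].
  destruct (step_char rho d Hrho Hsum Hd b i w' Hb Hw) as [s2 [Hs2 ->]].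
  assert (s1 = s2).
  { destruct s1, s2; auto; exfalso; apply Hnd; unfold betw; simpl in *; lra. }
  subst s2. exists s1. do 6 (split; auto).
  intros y Hy HP.
  destruct (nphi_betw i s1 a b y Ha Hb Hy) as [x [Hx Hxy]].
  assert (Hx01 : 0 <= x <= 1) by (unfold betw in Hx; lra).
  assert (Hsx : sideok d i s1 x) by (destruct s1; unfold betw in Hx; simpl in *; lra).
  apply (HN x Hx).
  apply inP_back with (param y (tgt i s1)); auto.
  rewrite <- Hxy. apply step_exists; auto.
Qed.

End C.


Definition sigma3 (v : pt) := v I1 * v I2 + v I2 * v I3 + v I3 * v I1.
Definition dsq (v w : pt) := ((v I1 - w I1)^2 + (v I2 - w I2)^2 + (v I3 - w I3)^2) / 2.
Definition Ept v w := dsq v w / (sigma3 v * sigma3 w).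

Lemma Ept_param a b i : 0 < a < 1 -> 0 < b < 1 -> Ept (param a i) (param b i) = Ex a b.
Proof.
  intros. unfold Ept, dsq, sigma3, Ex.
  destruct i; unfold param; simpl; field; repeat split; nra.
Qed.

Lemma dist1_sq v w : dist1 v w ^ 2 = dsq v w.
Proof.
  unfold dist1, dsq.
  assert (0 <= (v I1 - w I1) ^ 2 + (v I2 - w I2) ^ 2 + (v I3 - w I3) ^ 2).
  { pose proof (pow2_ge_0 (v I1 - w I1)). pose proof (pow2_ge_0 (v I2 - w I2)).
    pose proof (pow2_ge_0 (v I3 - w I3)). lra. }
  unfold Rdiv. rewrite Rpow_mult_distr. rewrite pow2_sqrt by auto.
  rewrite pow_inv. rewrite pow2_sqrt by lra. reflexivity.
Qed.

Lemma dist1_param a b i : dist1 (param a i) (param b i) = Rabs (a - b).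
Proof.
  assert (H : dsq (param a i) (param b i) = (a - b)^2).
  { unfold dsq; destruct i; unfold param; simpl; field. }
  assert (0 <= dist1 (param a i) (param b i)).
  { unfold dist1. apply Rdiv_le_0_compat. apply sqrt_pos. apply sqrt_lt_R0; lra. }
  pose proof (dist1_sq (param a i) (param b i)). rewrite H in H1.
  rewrite <- (Rabs_pos_eq (dist1 (param a i) (param b i))) by auto.
  apply Rsqr_eq_abs_0. rewrite !Rsqr_pow2. lra.
Qed.

Section C2.
Variables rho d : idx -> R.
Hypothesis Hrho : forall i, 0 < rho i < 1.
Hypothesis Hsum : rho I1 + rho I2 + rho I3 > 1.
Hypothesis Hd : forall i, 0 < d i < 1.

Definition mr := Rmin (Rmin (rho I1) (rho I2)) (rho I3).
Definition md := Rmin (Rmin (Rmin (d I1) (1 - d I1)) (Rmin (d I2) (1 - d I2))) (Rmin (d I3) (1 - d I3)).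
Definition eta := mr * md.
Definition kk := 1 / (1 + eta).

Lemma mr_pos : 0 < mr.
Proof.
  unfold mr. pose proof (Hrho I1). pose proof (Hrho I2). pose proof (Hrho I3).
  repeat apply Rmin_glb_lt; lra.
Qed.
Lemma md_pos : 0 < md.
Proof.
  unfold md. pose proof (Hd I1). pose proof (Hd I2). pose proof (Hd I3).
  repeat apply Rmin_glb_lt; lra.
Qed.
Lemma mr_le k : mr <= rho k.
Proof.
  unfold mr. destruct k; unfold Rmin; repeat destruct Rle_dec; lra.
Qed.
Lemma md_le i : md <= d i /\ md <= 1 - d i.
Proof.
  unfold md. destruct i; unfold Rmin; repeat destruct Rle_dec; lra.
Qed.
Lemma eta_pos : 0 < eta.
Proof. unfold eta. pose proof mr_pos. pose proof md_pos. nra. Qed.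
Lemma eta_le k i : eta <= rho k * d i /\ eta <= rho k * (1 - d i).
Proof.
  unfold eta. pose proof mr_pos. pose proof md_pos. pose proof (mr_le k). pose proof (md_le i).
  split; apply Rmult_le_compat; lra.
Qed.
Lemma kk_range : 0 < kk < 1.
Proof.
  unfold kk. pose proof eta_pos. split.
  - apply Rdiv_lt_0_compat; lra.
  - apply div_lt; lra.
Qed.

Lemma nphi_contr i s a b : 0 < a < 1 -> 0 < b < 1 -> sideok d i s a -> sideok d i s b ->
  Ex (nphi rho i s a) (nphi rho i s b) <= Ex a b * (kk * kk).
Proof.
  intros Ha Hb Hsa Hsb.
  pose proof (sum_permL rho i). pose proof (sum_permR rho i).
  pose proof (Hrho i). pose proof (Hrho (succ i)). pose proof (Hrho (ss i)). pose proof (Hd i).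
  pose proof (Ex_nonneg a b Ha Hb). pose proof eta_pos.
  destruct s; simpl in *.
  - rewrite phiL_contr by (auto; lra).
    pose proof (eta_le (ss i) i).
    unfold kk. apply prod_bound; auto.
    + apply (FL_le (rho (succ i)) (rho (ss i)) a (d i) eta); lra.
    + apply (FL_le (rho (succ i)) (rho (ss i)) b (d i) eta); lra.
  - rewrite phiR_contr by (auto; lra).
    pose proof (eta_le (succ i) i).
    unfold kk. apply prod_bound; auto.
    + apply (FR_le (rho (ss i)) (rho (succ i)) a (d i) eta); lra.
    + apply (FR_le (rho (ss i)) (rho (succ i)) b (d i) eta); lra.
Qed.

Lemma core_iter tr1 tr2 a b i : Trajectory rho d tr1 -> Trajectory rho d tr2 ->
  tr1 O = param a i -> tr2 O = param b i -> 0 <= a <= 1 -> 0 <= b <= 1 -> NoPB rho d i a b ->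
  forall n, exists e x y, 0 <= x <= 1 /\ 0 <= y <= 1 /\ tr1 n = param x e /\ tr2 n = param y e /\
     NoPB rho d e x y /\ ((0 < n)%nat -> 0 < x < 1 /\ 0 < y < 1).
Proof.
  intros T1 T2 H1 H2 Ha Hb HN n. induction n.
  - exists i, a, b. repeat split; auto; try lra; intros; lia.
  - destruct IHn as [e [x [y [Hx [Hy [E1 [E2 [HN' _]]]]]]]].
    pose proof (T1 n) as S1. pose proof (T2 n) as S2. rewrite E1 in S1. rewrite E2 in S2.
    destruct (core_step rho d Hrho Hsum Hd e x y _ _ Hx Hy HN' S1 S2)
      as [s [Hsx [Hsy [_ [_ [F1 [F2 HN2]]]]]]].
    pose proof (nphi_range rho d Hrho Hsum Hd x e s Hx Hsx).
    pose proof (nphi_range rho d Hrho Hsum Hd y e s Hy Hsy).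
    exists (tgt e s), (nphi rho e s x), (nphi rho e s y). repeat split; auto; lra.
Qed.

Lemma contr_step tr1 tr2 e x y n : Trajectory rho d tr1 -> Trajectory rho d tr2 ->
  tr1 n = param x e -> tr2 n = param y e -> 0 < x < 1 -> 0 < y < 1 -> NoPB rho d e x y ->
  Ept (tr1 (S n)) (tr2 (S n)) <= Ept (tr1 n) (tr2 n) * (kk * kk).
Proof.
  intros T1 T2 E1 E2 Hx Hy HN'.
  pose proof (T1 n) as S1. pose proof (T2 n) as S2. rewrite E1 in S1. rewrite E2 in S2.
  destruct (core_step rho d Hrho Hsum Hd e x y _ _ ltac:(lra) ltac:(lra) HN' S1 S2)
      as [s [Hsx [Hsy [_ [_ [F1 [F2 HN2]]]]]]].
  pose proof (nphi_range rho d Hrho Hsum Hd x e s ltac:(lra) Hsx).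
  pose proof (nphi_range rho d Hrho Hsum Hd y e s ltac:(lra) Hsy).
  rewrite F1, F2, E1, E2, !Ept_param by auto.
  apply nphi_contr; auto.
Qed.

End C2.


Lemma sq_le x y : 0 <= y -> x ^ 2 <= y ^ 2 -> x <= y.
Proof. intros. destruct (Rle_dec x y); auto. nra. Qed.

Lemma dist1_nonneg v w : 0 <= dist1 v w.
Proof. unfold dist1. apply Rdiv_le_0_compat. apply sqrt_pos. apply sqrt_lt_R0; lra. Qed.

Lemma sqrt3_tri x1 x2 x3 y1 y2 y3 :
  sqrt ((x1 + y1)^2 + (x2 + y2)^2 + (x3 + y3)^2) <=
  sqrt (x1^2 + x2^2 + x3^2) + sqrt (y1^2 + y2^2 + y3^2).
Proof.
  set (X := x1^2 + x2^2 + x3^2). set (Y := y1^2 + y2^2 + y3^2).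
  pose proof (pow2_ge_0 x1). pose proof (pow2_ge_0 x2). pose proof (pow2_ge_0 x3).
  pose proof (pow2_ge_0 y1). pose proof (pow2_ge_0 y2). pose proof (pow2_ge_0 y3).
  pose proof (pow2_ge_0 (x1+y1)). pose proof (pow2_ge_0 (x2+y2)). pose proof (pow2_ge_0 (x3+y3)).
  assert (HX : 0 <= X) by (unfold X; lra). assert (HY : 0 <= Y) by (unfold Y; lra).
  assert (HS : 0 <= (x1 + y1)^2 + (x2 + y2)^2 + (x3 + y3)^2) by lra.
  apply sq_le. pose proof (sqrt_pos X). pose proof (sqrt_pos Y). lra.
  rewrite pow2_sqrt by auto.
  replace ((sqrt X + sqrt Y)^2) with (X + Y + 2 * (sqrt X * sqrt Y)) by
    (simpl; rewrite !Rmult_1_r; rewrite <- (sqrt_sqrt X HX) at 1; rewrite <- (sqrt_sqrt Y HY) at 1; ring).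
  rewrite <- sqrt_mult by auto.
  set (P := x1 * y1 + x2 * y2 + x3 * y3).
  assert (P <= sqrt (X * Y)).
  { destruct (Rle_dec P 0). pose proof (sqrt_pos (X*Y)). lra.
    apply sq_le. apply sqrt_pos. rewrite pow2_sqrt by nra.
    assert (X * Y - P^2 = (x1*y2 - x2*y1)^2 + (x2*y3 - x3*y2)^2 + (x1*y3 - x3*y1)^2)
      by (unfold X, Y, P; ring).
    pose proof (pow2_ge_0 (x1*y2 - x2*y1)). pose proof (pow2_ge_0 (x2*y3 - x3*y2)).
    pose proof (pow2_ge_0 (x1*y3 - x3*y1)). lra. }
  unfold X, Y, P in *. nra.
Qed.

Lemma dist1_tri u v w : dist1 u w <= dist1 u v + dist1 v w.
Proof.
  unfold dist1.
  assert (0 < sqrt 2) by (apply sqrt_lt_R0; lra).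
  unfold Rdiv. rewrite <- Rmult_plus_distr_r. apply Rmult_le_compat_r.
  apply Rlt_le, Rinv_0_lt_compat; auto.
  replace (u I1 - w I1) with ((u I1 - v I1) + (v I1 - w I1)) by ring.
  replace (u I2 - w I2) with ((u I2 - v I2) + (v I2 - w I2)) by ring.
  replace (u I3 - w I3) with ((u I3 - v I3) + (v I3 - w I3)) by ring.
  apply sqrt3_tri.
Qed.

Lemma dist1_sym u v : dist1 u v = dist1 v u.
Proof.
  unfold dist1. f_equal. f_equal. ring.
Qed.

Lemma dist1_refl u : dist1 u u = 0.
Proof.
  unfold dist1. replace ((u I1 - u I1) ^ 2 + (u I2 - u I2) ^ 2 + (u I3 - u I3) ^ 2) with 0 by ring.
  rewrite sqrt_0. unfold Rdiv; ring.
Qed.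

Lemma dist1_zero u v : dist1 u v = 0 -> u = v.
Proof.
  intros H. unfold dist1 in H.
  assert (0 < sqrt 2) by (apply sqrt_lt_R0; lra).
  assert (Hs : sqrt ((u I1 - v I1) ^ 2 + (u I2 - v I2) ^ 2 + (u I3 - v I3) ^ 2) = 0).
  { unfold Rdiv in H. apply Rmult_integral in H. destruct H; auto.
    exfalso. pose proof (Rinv_0_lt_compat _ H0). lra. }
  pose proof (pow2_ge_0 (u I1 - v I1)). pose proof (pow2_ge_0 (u I2 - v I2)). pose proof (pow2_ge_0 (u I3 - v I3)).
  apply sqrt_eq_0 in Hs; [|lra].
  apply functional_extensionality; intros l.
  destruct l; nra.
Qed.

Lemma cv0_le (a b : nat -> R) : Un_cv b 0 -> (forall n, 0 <= a n <= b n) -> Un_cv a 0.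
Proof.
  intros Hb Hab eps He. destruct (Hb eps He) as [N HN]. exists N. intros n Hn.
  specialize (HN n Hn). specialize (Hab n). unfold R_dist in *.
  rewrite Rminus_0_r in *. rewrite Rabs_pos_eq in * by lra. lra.
Qed.

Lemma cv0_plus (a b : nat -> R) : Un_cv a 0 -> Un_cv b 0 -> Un_cv (fun n => a n + b n) 0.
Proof.
  intros Ha Hb. replace 0 with (0 + 0) by ring. apply CV_plus; auto.
Qed.

Lemma cv0_sub (a : nat -> R) (phi : nat -> nat) : Un_cv a 0 -> (forall n, (n <= phi n)%nat) ->
  Un_cv (fun n => a (phi n)) 0.
Proof.
  intros Ha Hp eps He. destruct (Ha eps He) as [N HN]. exists N. intros n Hn.
  apply HN. specialize (Hp n). lia.
Qed.

Lemma cv0_geom M k : 0 <= k < 1 -> Un_cv (fun n => M * k ^ n) 0.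
Proof.
  intros Hk. replace 0 with (M * 0) by ring. apply CV_mult.
  - intros eps He. exists O. intros. unfold R_dist. rewrite Rminus_eq_0, Rabs_R0. auto.
  - intros eps He. destruct (pow_lt_1_zero k ltac:(rewrite Rabs_pos_eq; lra) eps He) as [N HN].
    exists N. intros n Hn. unfold R_dist. rewrite Rminus_0_r. auto.
Qed.


Lemma param_inj_same a b e : 0 <= a <= 1 -> 0 <= b <= 1 -> param a e = param b e -> a = b.
Proof.
  intros Ha Hb E. destruct (param_inj a e b e Ha Hb E) as [[_ ?]|[[_ [E2 _]]|[_ [E2 _]]]]; auto;
  destruct e; discriminate.
Qed.

Lemma cv0_shift (a : nat -> R) : Un_cv (fun n => a (S n)) 0 -> Un_cv a 0.
Proof.
  intros H eps He. destruct (H eps He) as [N HN]. exists (S N). intros n Hn.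
  destruct n; [lia|]. apply HN. lia.
Qed.

Lemma conv_transfer tr1 tr2 m u : ConvergesOnto tr1 m u ->
  Un_cv (fun n => dist1 (tr1 n) (tr2 n)) 0 -> ConvergesOnto tr2 m u.
Proof.
  intros [n0 Hc] Hd. exists n0. intros n Hn.
  apply cv0_le with (fun t => dist1 (tr1 (m * t + n + n0)%nat) (tr2 (m * t + n + n0)%nat) +
                               dist1 (tr1 (m * t + n + n0)%nat) (u n)).
  - apply cv0_plus; [|apply Hc; auto].
    apply (cv0_sub (fun s => dist1 (tr1 s) (tr2 s)) (fun t => (m * t + n + n0)%nat)); auto.
    intros t. nia.
  - intros t. split; [apply dist1_nonneg|].
    rewrite (dist1_sym (tr1 _) (tr2 _)). apply dist1_tri.
Qed.

Section P2.
Variables rho d : idx -> R.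
Hypothesis Hrho : forall i, 0 < rho i < 1.
Hypothesis Hsum : rho I1 + rho I2 + rho I3 > 1.
Hypothesis Hd : forall i, 0 < d i < 1.

Lemma decay tr1 tr2 a b i : Trajectory rho d tr1 -> Trajectory rho d tr2 ->
  tr1 O = param a i -> tr2 O = param b i -> 0 <= a <= 1 -> 0 <= b <= 1 -> NoPB rho d i a b ->
  Un_cv (fun n => dist1 (tr1 n) (tr2 n)) 0.
Proof.
  intros T1 T2 E1 E2 Ha Hb HN.
  pose proof (core_iter rho d Hrho Hsum Hd tr1 tr2 a b i T1 T2 E1 E2 Ha Hb HN) as CI.
  pose proof (kk_range rho d Hrho Hd) as Hkk.
  set (E0 := Ept (tr1 1%nat) (tr2 1%nat)).
  assert (Hdec : forall n, Ept (tr1 (S n)) (tr2 (S n)) <= E0 * (kk rho d * kk rho d) ^ n).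
  { induction n.
    - unfold E0. simpl. lra.
    - destruct (CI (S n)) as [e [x [y [Hx [Hy [F1 [F2 [HN' Hin]]]]]]]].
      destruct (Hin ltac:(lia)) as [Hx' Hy'].
      pose proof (contr_step rho d Hrho Hsum Hd tr1 tr2 e x y (S n) T1 T2 F1 F2 Hx' Hy' HN').
      assert (0 <= kk rho d * kk rho d) by nra.
      simpl. nra. }
  assert (HE0 : 0 <= E0).
  { unfold E0. destruct (CI 1%nat) as [e [x [y [Hx [Hy [F1 [F2 [HN' Hin]]]]]]]].
    destruct (Hin ltac:(lia)). rewrite F1, F2, Ept_param by auto. apply Ex_nonneg; auto. }
  apply cv0_shift.
  apply cv0_le with (fun n => sqrt E0 * (kk rho d) ^ n).
  - apply cv0_geom. lra.
  - intros n. split; [apply dist1_nonneg|].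
    destruct (CI (S n)) as [e [x [y [Hx [Hy [F1 [F2 [HN' Hin]]]]]]]].
    destruct (Hin ltac:(lia)) as [Hx' Hy'].
    apply sq_le. apply Rmult_le_pos. apply sqrt_pos. apply pow_le. lra.
    pose proof (Hdec n) as Hn. rewrite F1, F2 in *. rewrite Ept_param in Hn by auto.
    rewrite dist1_param. pose proof (Ex_ge x y Hx' Hy').
    rewrite pow2_abs.
    replace ((sqrt E0 * kk rho d ^ n) ^ 2) with (sqrt E0 ^ 2 * (kk rho d ^ n * kk rho d ^ n)) by ring.
    rewrite pow2_sqrt by auto. rewrite <- Rpow_mult_distr. lra.
Qed.

End P2.


Section P2b.
Variables rho d : idx -> R.
Hypothesis Hrho : forall i, 0 < rho i < 1.
Hypothesis Hsum : rho I1 + rho I2 + rho I3 > 1.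
Hypothesis Hd : forall i, 0 < d i < 1.

Lemma not_closure z : ~ InClosureP rho d z ->
  exists eps, 0 < eps /\ forall p, InP rho d p -> eps <= dist1 z p.
Proof.
  intros H. apply not_all_ex_not in H. destruct H as [eps H].
  apply imply_to_and in H. destruct H as [He H].
  exists eps. split; auto. intros p Hp. destruct (Rle_dec eps (dist1 z p)); auto.
  exfalso. apply H. exists p. split; auto. lra.
Qed.

Lemma unique_traj tr1 tr2 b i : Trajectory rho d tr1 -> Trajectory rho d tr2 ->
  tr1 O = param b i -> tr2 O = param b i -> 0 <= b <= 1 -> NoPB rho d i b b ->
  forall t, tr1 t = tr2 t.
Proof.
  intros T1 T2 E1 E2 Hb HN.
  pose proof (core_iter rho d Hrho Hsum Hd tr1 tr2 b b i T1 T2 E1 E2 Hb Hb HN) as CI.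
  induction t.
  - congruence.
  - destruct (CI t) as [e [x [y [Hx [Hy [F1 [F2 [HN' _]]]]]]]].
    assert (x = y) by (apply (param_inj_same x y e); auto; congruence). subst y.
    pose proof (T1 t) as S1. pose proof (T2 t) as S2. rewrite F1 in S1. rewrite F2 in S2.
    destruct (core_step rho d Hrho Hsum Hd e x x _ _ Hx Hx HN' S1 S2)
      as [s [_ [_ [_ [_ [G1 [G2 _]]]]]]]. congruence.
Qed.

Lemma part2 : forall z m u tr,
     PeriodicOrbit rho d m u -> ~ InClosureP rho d z ->
     Trajectory rho d tr -> tr O = z -> ConvergesOnto tr m u ->
     exists eps, 0 < eps /\ forall z', Nbhd eps z z' ->
       (exists tr', Trajectory rho d tr' /\ tr' O = z') /\
       (forall tr1 tr2, Trajectory rho d tr1 -> tr1 O = z' ->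
          Trajectory rho d tr2 -> tr2 O = z' -> forall t, tr1 t = tr2 t) /\
       (forall tr', Trajectory rho d tr' -> tr' O = z' -> ConvergesOnto tr' m u).
Proof.
  intros z m u tr _ Hcl T E Hc.
  destruct (not_closure z Hcl) as [eps [He Hp]].
  exists eps. split; auto. intros z' [i [x [x' [[Hx Ez] [[Hx' Ez'] Hxx]]]]].
  assert (HN : NoPB rho d i x x').
  { intros y Hy HP. specialize (Hp _ HP). rewrite Ez, dist1_param in Hp.
    unfold betw in Hy. unfold Rabs in *. repeat destruct Rcase_abs; lra. }
  assert (HN' : NoPB rho d i x' x').
  { intros y Hy. apply HN. unfold betw in *. lra. }
  split; [|split].
  - rewrite Ez'. apply (traj_exists rho d Hrho Hsum Hd). auto.
  - intros tr1 tr2 T1 E1 T2 E2. apply (unique_traj tr1 tr2 x' i); auto; congruence.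
  - intros tr' T' E'. apply conv_transfer with tr; auto.
    apply (decay rho d Hrho Hsum Hd tr tr' x x' i); auto; congruence.
Qed.

Lemma orbit_traj m u n : PeriodicOrbit rho d m u -> (n < m)%nat ->
  Trajectory rho d (fun t => u ((n + t) mod m)%nat).
Proof.
  intros [Hm [Hs Hl]] Hn t.
  assert (Hm0 : m <> O) by lia.
  replace ((n + S t) mod m)%nat with (((n + t) mod m + 1) mod m)%nat.
  2:{ rewrite Nat.Div0.add_mod_idemp_l. f_equal. lia. }
  set (k := ((n + t) mod m)%nat).
  assert (Hk : (k < m)%nat) by (apply Nat.mod_upper_bound; auto).
  destruct (Nat.lt_ge_cases (k + 1) m).
  - rewrite Nat.mod_small by auto. replace (k + 1)%nat with (S k) by lia. apply Hs. lia.
  - assert (k = m - 1)%nat by lia. replace (k + 1)%nat with m by lia.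
    rewrite Nat.Div0.mod_same. rewrite H0. auto.
Qed.

Lemma orbit_conv m u n : PeriodicOrbit rho d m u -> (n < m)%nat ->
  ConvergesOnto (fun t => u ((n + t) mod m)%nat) m u.
Proof.
  intros [Hm _] Hn. exists (m - n)%nat. intros k Hk.
  intros eps He. exists O. intros t _.
  replace ((n + (m * t + k + (m - n))) mod m)%nat with k.
  - rewrite dist1_refl. unfold R_dist. rewrite Rminus_0_r, Rabs_R0. auto.
  - replace (n + (m * t + k + (m - n)))%nat with (k + (t + 1) * m)%nat by nia.
    rewrite Nat.Div0.mod_add. rewrite Nat.mod_small; auto.
Qed.

Lemma part3 : forall m u, PeriodicOrbit rho d m u ->
     (forall n, (n < m)%nat -> ~ InClosureP rho d (u n)) ->
     Stable rho d m u.
Proof.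
  intros m u Hpo Hcl n Hn.
  destruct (part2 (u n) m u (fun t => u ((n + t) mod m)%nat) Hpo (Hcl n Hn)
              (orbit_traj m u n Hpo Hn)) as [eps [He H]].
  - simpl. rewrite Nat.add_0_r, Nat.mod_small; auto.
  - apply orbit_conv; auto.
  - exists eps. split; auto. intros z tr Hz T E. destruct (H z Hz) as [_ [_ H3]]. auto.
Qed.

End P2b.


Lemma pow_dec x m n : 0 <= x <= 1 -> (m <= n)%nat -> x ^ n <= x ^ m.
Proof.
  intros Hx Hmn. induction Hmn; [lra|].
  simpl. pose proof (pow_le x m0 ltac:(lra)).
  assert (x * x ^ m0 <= x ^ m0) by nra. lra.
Qed.

Lemma pow_lt1 x T : 0 <= x < 1 -> (1 <= T)%nat -> x ^ T < 1.
Proof.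
  intros Hx HT. pose proof (pow_dec x 1 T ltac:(lra) HT). simpl in H. lra.
Qed.

Lemma pigeon (A : Type) (f : nat -> A) (L : list A) t :
  (forall k, (t <= k <= t + length L)%nat -> In (f k) L) ->
  exists a b, (t <= a)%nat /\ (a < b)%nat /\ (b <= t + length L)%nat /\ f a = f b.
Proof.
  intros HL. apply NNPP. intros Hno.
  assert (HND : NoDup (map f (seq t (S (length L))))).
  { apply NoDup_map_NoDup_ForallPairs; [|apply seq_NoDup].
    intros a b Ha Hb Hf. apply in_seq in Ha. apply in_seq in Hb.
    destruct (Nat.lt_trichotomy a b) as [Hab|[Hab|Hab]]; auto; exfalso; apply Hno.
    - exists a, b. repeat split; try lia; auto.
    - exists b, a. repeat split; try lia; auto. }
  assert (Hinc : incl (map f (seq t (S (length L)))) L).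
  { intros x Hx. apply in_map_iff in Hx. destruct Hx as [k [<- Hk]]. apply in_seq in Hk.
    apply HL. lia. }
  pose proof (NoDup_incl_length HND Hinc). rewrite length_map, length_seq in H. lia.
Qed.

Lemma filter_le (A : Type) (f g : A -> bool) l :
  (forall x, In x l -> f x = true -> g x = true) ->
  (length (filter f l) <= length (filter g l))%nat.
Proof.
  induction l as [|a l IH]; intros H; simpl; auto.
  assert (IH' : (length (filter f l) <= length (filter g l))%nat) by (apply IH; intros; apply H; simpl; auto).
  destruct (f a) eqn:Ef.
  - rewrite (H a (or_introl eq_refl) Ef). simpl. lia.
  - destruct (g a); simpl; lia.
Qed.

Lemma filter_lt (A : Type) (f g : A -> bool) l :
  (forall x, In x l -> f x = true -> g x = true) ->
  (exists x, In x l /\ g x = true /\ f x = false) ->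
  (length (filter f l) < length (filter g l))%nat.
Proof.
  induction l as [|a l IH]; intros H [x [Hx [Hg Hf]]]; simpl in *; [contradiction|].
  assert (Hle : (length (filter f l) <= length (filter g l))%nat) by (apply filter_le; intros; apply H; auto).
  destruct Hx as [<-|Hx].
  - rewrite Hf, Hg. simpl. lia.
  - assert (Hlt : (length (filter f l) < length (filter g l))%nat).
    { apply IH; [intros; apply H; auto| exists x; auto]. }
    destruct (f a) eqn:Ef.
    + rewrite (H a (or_introl eq_refl) Ef). simpl. lia.
    + destruct (g a); simpl; lia.
Qed.

Lemma filter_len (A : Type) (f : A -> bool) l : (length (filter f l) <= length l)%nat.
Proof. induction l; simpl; auto. destruct (f a); simpl; lia. Qed.

Lemma geom_tail (b : nat -> R) C q : 0 <= q < 1 -> 0 <= C ->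
  (forall k, Rabs (b k - b (S k)) <= C * q ^ k) ->
  forall k l, Rabs (b k - b (k + l)%nat) <= C * q ^ k * (1 - q ^ l) / (1 - q).
Proof.
  intros Hq HC Hb k l. induction l.
  - rewrite Nat.add_0_r. rewrite Rminus_diag, Rabs_R0. simpl.
    replace (C * q ^ k * (1 - 1) / (1 - q)) with 0 by (field; lra). lra.
  - replace (b k - b (k + S l)%nat) with ((b k - b (k + l)%nat) + (b (k + l)%nat - b (S (k + l)))).
    2:{ replace (k + S l)%nat with (S (k + l)) by lia. ring. }
    eapply Rle_trans; [apply Rabs_triang|].
    pose proof (Hb (k + l)%nat). rewrite pow_add in H.
    replace (C * q ^ k * (1 - q ^ S l) / (1 - q)) with
      (C * q ^ k * (1 - q ^ l) / (1 - q) + C * (q ^ k * q ^ l)).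
    lra. simpl. field. lra.
Qed.

Lemma geom_cauchy (b : nat -> R) C q : 0 <= q < 1 -> 0 <= C ->
  (forall k, Rabs (b k - b (S k)) <= C * q ^ k) -> Cauchy_crit b.
Proof.
  intros Hq HC Hb eps He.
  assert (Hy : 0 < eps * (1 - q) / (C + 1)) by (apply Rdiv_lt_0_compat; [apply Rmult_lt_0_compat|]; lra).
  destruct (pow_lt_1_zero q ltac:(rewrite Rabs_pos_eq; lra) _ Hy) as [N HN].
  exists N. intros n m Hn Hm. unfold R_dist.
  assert (Hgen : forall n m, (n >= N)%nat -> (n <= m)%nat -> Rabs (b n - b m) < eps).
  { intros n0 m0 Hn0 Hnm. replace m0 with (n0 + (m0 - n0))%nat by lia.
    eapply Rle_lt_trans; [apply (geom_tail b C q Hq HC Hb)|].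
    specialize (HN n0 Hn0). rewrite Rabs_pos_eq in HN by (apply pow_le; lra).
    pose proof (pow_le q (m0 - n0) ltac:(lra)). pose proof (pow_le q n0 ltac:(lra)).
    apply div_lt; [lra|].
    assert (0 <= C * q ^ n0) by (apply Rmult_le_pos; lra).
    assert (0 <= C * q ^ n0 * q ^ (m0 - n0)) by (apply Rmult_le_pos; lra).
    assert (C * q ^ n0 * (1 - q ^ (m0 - n0)) <= C * q ^ n0) by lra.
    assert (C * q ^ n0 <= C * (eps * (1 - q) / (C + 1))) by (apply Rmult_le_compat_l; lra).
    assert (C * (eps * (1 - q) / (C + 1)) < eps * (1 - q)).
    { replace (C * (eps * (1 - q) / (C + 1))) with (eps * (1 - q) * (C / (C + 1))) by (field; lra).
      assert (C / (C + 1) < 1) by (apply div_lt; lra).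
      assert (0 < eps * (1 - q)) by nra. nra. }
    lra. }
  destruct (Nat.le_ge_cases n m).
  - apply Hgen; auto.
  - rewrite <- Rabs_Ropp, Ropp_minus_distr. apply Hgen; auto.
Qed.

Lemma cv_le_c (b : nat -> R) l c : Un_cv b l -> (forall k, b k <= c) -> l <= c.
Proof.
  intros Hb Hc. destruct (Rle_dec l c); auto. exfalso.
  destruct (Hb (l - c) ltac:(lra)) as [N HN]. specialize (HN N (le_n N)). specialize (Hc N).
  unfold R_dist in HN. unfold Rabs in HN. destruct Rcase_abs; lra.
Qed.
Lemma cv_ge_c (b : nat -> R) l c : Un_cv b l -> (forall k, c <= b k) -> c <= l.
Proof.
  intros Hb Hc. destruct (Rle_dec c l); auto. exfalso.
  destruct (Hb (c - l) ltac:(lra)) as [N HN]. specialize (HN N (le_n N)). specialize (Hc N).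
  unfold R_dist in HN. unfold Rabs in HN. destruct Rcase_abs; lra.
Qed.


Lemma cross_lemma ri rj rk x y : 0 < ri < 1 -> 0 < rj < 1 -> 0 < rk < 1 -> ri + rj + rk > 1 ->
  0 <= x <= 1 -> 0 <= y <= 1 -> phiL ri rj rk x = phiR rk rj ri y -> x = 0 /\ y = 1.
Proof.
  intros Hi Hj Hk Hs Hx Hy E.
  assert (E0 : phiL ri rj rk 0 = phiR rk rj ri 1).
  { unfold phiL, phiR, th. field. lra. }
  assert (x = 0).
  { destruct (Req_dec x 0); auto. exfalso.
    pose proof (phiL_dec ri rj rk Hi Hj Hs 0 x ltac:(lra) ltac:(lra) ltac:(lra)).
    destruct (Req_dec y 1). subst; lra.
    pose proof (phiR_dec rk rj ri ltac:(lra) Hj ltac:(lra) y 1 ltac:(lra) ltac:(lra) ltac:(lra)). lra. }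
  subst x. split; auto. destruct (Req_dec y 1); auto. exfalso.
  pose proof (phiR_dec rk rj ri ltac:(lra) Hj ltac:(lra) y 1 ltac:(lra) ltac:(lra) ltac:(lra)). lra.
Qed.

Section K.
Variables rho d : idx -> R.
Hypothesis Hrho : forall i, 0 < rho i < 1.
Hypothesis Hsum : rho I1 + rho I2 + rho I3 > 1.
Hypothesis Hd : forall i, 0 < d i < 1.

Lemma nphi_inj i s x y : 0 <= x <= 1 -> 0 <= y <= 1 -> nphi rho i s x = nphi rho i s y -> x = y.
Proof.
  intros Hx Hy E. pose proof (sum_permL rho i). pose proof (sum_permR rho i).
  pose proof (Hrho i). pose proof (Hrho (succ i)). pose proof (Hrho (ss i)).
  destruct (Rtotal_order x y) as [Hl|[He|Hg]]; auto; exfalso; destruct s; simpl in E.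
  - pose proof (phiL_dec (rho i) (rho (succ i)) (rho (ss i)) ltac:(auto) ltac:(auto) ltac:(lra) x y ltac:(lra) Hl ltac:(lra)). lra.
  - pose proof (phiR_dec (rho i) (rho (ss i)) (rho (succ i)) ltac:(auto) ltac:(auto) ltac:(lra) x y ltac:(lra) Hl ltac:(lra)). lra.
  - pose proof (phiL_dec (rho i) (rho (succ i)) (rho (ss i)) ltac:(auto) ltac:(auto) ltac:(lra) y x ltac:(lra) Hg ltac:(lra)). lra.
  - pose proof (phiR_dec (rho i) (rho (ss i)) (rho (succ i)) ltac:(auto) ltac:(auto) ltac:(lra) y x ltac:(lra) Hg ltac:(lra)). lra.
Qed.

Lemma param_inj_int a i b j : 0 < a < 1 -> 0 < b < 1 -> param a i = param b j -> j = i /\ b = a.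
Proof.
  intros Ha Hb E. destruct (param_inj a i b j ltac:(lra) ltac:(lra) E) as [H|[H|H]]; auto; lra.
Qed.

Lemma back_inj a b c : Step rho d a c -> Step rho d b c -> a = b.
Proof.
  intros S1 S2.
  destruct (step_src rho d a c S1) as [x [i [Hx ->]]].
  destruct (step_src rho d b c S2) as [y [i' [Hy ->]]].
  destruct (step_char rho d Hrho Hsum Hd x i c Hx S1) as [s [Hs E1]].
  destruct (step_char rho d Hrho Hsum Hd y i' c Hy S2) as [s' [Hs' E2]].
  pose proof (nphi_range rho d Hrho Hsum Hd x i s Hx Hs).
  pose proof (nphi_range rho d Hrho Hsum Hd y i' s' Hy Hs').
  rewrite E1 in E2. destruct (param_inj_int _ _ _ _ H H0 E2) as [Et En].
  pose proof (Hrho i). pose proof (Hrho (succ i)). pose proof (Hrho (ss i)).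
  pose proof (sum_permL rho i).
  destruct s, s'; simpl in Et.
  - assert (i' = i) by (destruct i, i'; simpl in *; congruence). subst i'.
    f_equal. symmetry. apply (nphi_inj i true); auto.
  - assert (i' = ss i) by (destruct i, i'; simpl in *; unfold ss in *; simpl in *; congruence). subst i'.
    simpl in En. replace (ss (ss i)) with (succ i) in En by (destruct i; reflexivity).
    replace (succ (ss i)) with i in En by (destruct i; reflexivity).
    symmetry in En.
    destruct (cross_lemma (rho i) (rho (succ i)) (rho (ss i)) x y ltac:(auto) ltac:(auto) ltac:(auto) ltac:(lra) Hx Hy En).
    subst. apply functional_extensionality; intros l; destruct i, l; unfold param, ss; simpl; ring.
  - assert (i = ss i') by (destruct i, i'; simpl in *; unfold ss in *; simpl in *; congruence). subst i.
    simpl in En. replace (ss (ss i')) with (succ i') in En by (destruct i'; reflexivity).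
    replace (succ (ss i')) with i' in En by (destruct i'; reflexivity).
    pose proof (Hrho i'). pose proof (sum_permL rho i').
    destruct (cross_lemma (rho i') (rho (succ i')) (rho (ss i')) y x ltac:(auto) ltac:(auto) ltac:(auto) ltac:(lra) Hy Hx En).
    subst. apply functional_extensionality; intros l; destruct i', l; unfold param, ss; simpl; ring.
  - assert (i' = i) by (destruct i, i'; simpl in *; unfold ss in *; simpl in *; congruence). subst i'.
    f_equal. symmetry. apply (nphi_inj i false); auto.
Qed.

End K.


Lemma Un_cv_ext (a b : nat -> R) l : (forall n, a n = b n) -> Un_cv a l -> Un_cv b l.
Proof. intros E H eps He. destruct (H eps He) as [N HN]. exists N. intros n Hn. rewrite <- E. auto. Qed.

Lemma cv_lip (b : nat -> R) l L : 0 <= L -> Un_cv b l -> Un_cv (fun k => L * Rabs (b k - l)) 0.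
Proof.
  intros HL Hb eps He.
  destruct (Hb (eps / (L + 1)) ltac:(apply Rdiv_lt_0_compat; lra)) as [N HN].
  exists N. intros n Hn. specialize (HN n Hn). unfold R_dist in *. rewrite Rminus_0_r.
  rewrite Rabs_pos_eq by (apply Rmult_le_pos; auto; apply Rabs_pos).
  assert (L * Rabs (b n - l) <= L * (eps / (L + 1))) by (apply Rmult_le_compat_l; lra).
  assert (L * (eps / (L + 1)) < eps).
  { replace (L * (eps / (L + 1))) with (eps * (L / (L + 1))) by (field; lra).
    assert (L / (L + 1) < 1) by (apply div_lt; lra). nra. }
  lra.
Qed.

Lemma lim_unique (a : nat -> pt) v w :
  Un_cv (fun k => dist1 (a k) v) 0 -> Un_cv (fun k => dist1 (a k) w) 0 -> v = w.
Proof.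
  intros Hv Hw. apply dist1_zero.
  assert (Un_cv (fun _ : nat => dist1 v w) 0).
  { apply cv0_le with (fun k => dist1 (a k) v + dist1 (a k) w).
    - apply cv0_plus; auto.
    - intros k. split; [apply dist1_nonneg|]. rewrite (dist1_sym (a k) v). apply dist1_tri. }
  apply (UL_sequence (fun _ => dist1 v w)); auto.
  intros eps He. exists O. intros. unfold R_dist. rewrite Rminus_diag, Rabs_R0. auto.
Qed.

Section L.
Variables rho d : idx -> R.
Hypothesis Hrho : forall i, 0 < rho i < 1.
Hypothesis Hsum : rho I1 + rho I2 + rho I3 > 1.
Hypothesis Hd : forall i, 0 < d i < 1.

Lemma nphi_lip i s : exists L, 0 <= L /\ forall a b, 0 <= a <= 1 -> 0 <= b <= 1 ->
  Rabs (nphi rho i s a - nphi rho i s b) <= L * Rabs (a - b).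
Proof.
  pose proof (sum_permL rho i). pose proof (sum_permR rho i).
  pose proof (Hrho i). pose proof (Hrho (succ i)). pose proof (Hrho (ss i)).
  destruct s; simpl.
  - exists (rho i / (1 - rho (succ i))). split; [apply Rdiv_le_0_compat; lra|].
    intros. apply phiL_lip; auto; lra.
  - exists (rho i / (1 - rho (ss i))). split; [apply Rdiv_le_0_compat; lra|].
    intros. apply phiR_lip; auto; lra.
Qed.

Lemma decay_bound tr1 tr2 a b i : Trajectory rho d tr1 -> Trajectory rho d tr2 ->
  tr1 O = param a i -> tr2 O = param b i -> 0 <= a <= 1 -> 0 <= b <= 1 -> NoPB rho d i a b ->
  exists C, 0 <= C /\ forall n, dist1 (tr1 n) (tr2 n) <= C * kk rho d ^ n.
Proof.
  intros T1 T2 E1 E2 Ha Hb HN.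
  pose proof (core_iter rho d Hrho Hsum Hd tr1 tr2 a b i T1 T2 E1 E2 Ha Hb HN) as CI.
  pose proof (kk_range rho d Hrho Hd) as Hkk.
  set (E0 := Ept (tr1 1%nat) (tr2 1%nat)).
  assert (Hdec : forall n, Ept (tr1 (S n)) (tr2 (S n)) <= E0 * (kk rho d * kk rho d) ^ n).
  { induction n.
    - unfold E0. simpl. lra.
    - destruct (CI (S n)) as [e [x [y [Hx [Hy [F1 [F2 [HN' Hin]]]]]]]].
      destruct (Hin ltac:(lia)) as [Hx' Hy'].
      pose proof (contr_step rho d Hrho Hsum Hd tr1 tr2 e x y (S n) T1 T2 F1 F2 Hx' Hy' HN').
      assert (0 <= kk rho d * kk rho d) by nra.
      simpl. nra. }
  assert (HE0 : 0 <= E0).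
  { unfold E0. destruct (CI 1%nat) as [e [x [y [Hx [Hy [F1 [F2 [HN' Hin]]]]]]]].
    destruct (Hin ltac:(lia)). rewrite F1, F2, Ept_param by auto. apply Ex_nonneg; auto. }
  assert (HS : forall n, dist1 (tr1 (S n)) (tr2 (S n)) <= sqrt E0 * kk rho d ^ n).
  { intros n.
    destruct (CI (S n)) as [e [x [y [Hx [Hy [F1 [F2 [HN' Hin]]]]]]]].
    destruct (Hin ltac:(lia)) as [Hx' Hy'].
    apply sq_le. apply Rmult_le_pos. apply sqrt_pos. apply pow_le. lra.
    pose proof (Hdec n) as Hn. rewrite F1, F2 in *. rewrite Ept_param in Hn by auto.
    rewrite dist1_param. pose proof (Ex_ge x y Hx' Hy').
    rewrite pow2_abs.
    replace ((sqrt E0 * kk rho d ^ n) ^ 2) with (sqrt E0 ^ 2 * (kk rho d ^ n * kk rho d ^ n)) by ring.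
    rewrite pow2_sqrt by auto. rewrite <- Rpow_mult_distr. lra. }
  exists (dist1 (tr1 O) (tr2 O) + sqrt E0 / kk rho d).
  assert (0 <= sqrt E0 / kk rho d) by (apply Rdiv_le_0_compat; [apply sqrt_pos|lra]).
  pose proof (dist1_nonneg (tr1 O) (tr2 O)).
  split; [lra|]. intros [|n].
  - simpl. lra.
  - eapply Rle_trans; [apply HS|].
    replace (sqrt E0 * kk rho d ^ n) with (sqrt E0 / kk rho d * kk rho d ^ S n) by (simpl; field; lra).
    apply Rmult_le_compat_r; [apply pow_le; lra| lra].
Qed.

End L.


Definition eid (v : pt) : idx :=
  if Req_EM_T (v I1) 0 then I1 else if Req_EM_T (v I2) 0 then I2 else I3.
Definition inum (i : idx) : nat := match i with I1 => 0 | I2 => 1 | I3 => 2 end.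
Definition cntf (i : idx) (v : pt) (p : pt) : bool :=
  if Req_EM_T (p i) 0 then (if Rlt_dec (p (ss i)) (v (ss i)) then true else false) else false.
Definition cnt (Lp : list pt) i v := length (filter (cntf i v) Lp).
Definition key (Lp : list pt) (v : pt) : nat :=
  (inum (eid v) * S (length Lp) + cnt Lp (eid v) v)%nat.

Lemma eid_param a i : 0 < a < 1 -> eid (param a i) = i.
Proof.
  intros Ha. unfold eid. destruct i; unfold param; simpl;
  repeat destruct Req_EM_T; auto; lra.
Qed.
Lemma param_at_i a i : param a i i = 0.
Proof. destruct i; reflexivity. Qed.
Lemma param_at_ss a i : param a i (ss i) = a.
Proof. destruct i; reflexivity. Qed.

Lemma key_bound Lp v : (key Lp v < 3 * S (length Lp))%nat.
Proof.
  unfold key, cnt. pose proof (filter_len pt (cntf (eid v) v) Lp).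
  destruct (eid v); simpl inum; lia.
Qed.

Lemma key_split (Lp : list pt) a b c1 c2 : (c1 <= length Lp)%nat -> (c2 <= length Lp)%nat ->
  (a * S (length Lp) + c1 = b * S (length Lp) + c2)%nat -> a = b /\ c1 = c2.
Proof.
  intros H1 H2 E. destruct (Nat.lt_trichotomy a b) as [H|[H|H]].
  - exfalso. assert (a * S (length Lp) + S (length Lp) <= b * S (length Lp))%nat by nia. lia.
  - subst. lia.
  - exfalso. assert (b * S (length Lp) + S (length Lp) <= a * S (length Lp))%nat by nia. lia.
Qed.

Lemma inum_inj i j : inum i = inum j -> i = j.
Proof. destruct i, j; simpl; congruence. Qed.

Section KY.
Variables rho d : idx -> R.

Lemma key_NoPB Lp a b i j : (forall p, InP rho d p -> In p Lp) ->
  0 < a < 1 -> 0 < b < 1 -> ~ InP rho d (param a i) -> ~ InP rho d (param b j) ->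
  key Lp (param a i) = key Lp (param b j) -> j = i /\ NoPB rho d i a b.
Proof.
  intros HL Ha Hb Pa Pb E. unfold key in E. rewrite !eid_param in E by auto.
  unfold cnt in E.
  destruct (key_split Lp _ _ _ _ (filter_len _ _ _) (filter_len _ _ _) E) as [Ei Ec].
  apply inum_inj in Ei. subst j. split; auto.
  intros y Hy HP.
  assert (y <> a) by (intros ->; auto). assert (y <> b) by (intros ->; auto).
  assert (Hcnt : forall u w, u < y -> y < w -> (length (filter (cntf i (param u i)) Lp) <
                  length (filter (cntf i (param w i)) Lp))%nat).
  { intros u w Hu Hw. apply filter_lt.
    - intros p _. unfold cntf. rewrite !param_at_ss.
      repeat destruct Req_EM_T; repeat destruct Rlt_dec; auto; lra.
    - exists (param y i). split; [apply HL; auto|]. unfold cntf.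
      rewrite !param_at_ss, param_at_i. destruct Req_EM_T; [|lra].
      split; repeat destruct Rlt_dec; auto; lra. }
  unfold betw in Hy. destruct (Rlt_dec a b).
  - specialize (Hcnt a b ltac:(lra) ltac:(lra)). lia.
  - specialize (Hcnt b a ltac:(lra) ltac:(lra)). lia.
Qed.

End KY.


Section LIM.
Variables rho d : idx -> R.
Hypothesis Hrho : forall i, 0 < rho i < 1.
Hypothesis Hsum : rho I1 + rho I2 + rho I3 > 1.
Hypothesis Hd : forall i, 0 < d i < 1.

Lemma rep_unique v x e' z e : 0 <= x <= 1 -> 0 < z < 1 -> v = param x e' -> v = param z e -> e' = e /\ x = z.
Proof.
  intros Hx Hz E1 E2. rewrite E1 in E2.
  destruct (param_inj z e x e' ltac:(lra) Hx (eq_sym E2)) as [[? ?]|[[? _]|[? _]]]; auto; lra.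
Qed.

Lemma limit_lemma (y : nat -> pt) p C :
  Trajectory rho d y -> (1 <= p)%nat -> 0 <= C ->
  (forall n, ~ InP rho d (y n)) ->
  (forall n, exists x e, 0 < x < 1 /\ y n = param x e) ->
  (forall n, exists e x x', 0 <= x <= 1 /\ 0 <= x' <= 1 /\ y n = param x e /\
       y (n + p)%nat = param x' e /\ NoPB rho d e x x') ->
  (forall n, dist1 (y n) (y (n + p)%nat) <= C * kk rho d ^ n) ->
  forall r, exists v w, Un_cv (fun k => dist1 (y (r + k * p)%nat) v) 0 /\
    Un_cv (fun k => dist1 (y (S r + k * p)%nat) w) 0 /\ Step rho d v w.
Proof.
  intros T Hp HC Hnp Hint Hcore Hbd r.
  pose proof (kk_range rho d Hrho Hd) as Hkk.
  destruct (Hint r) as [c [e [Hc Er]]].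
  set (b := fun k => y (r + k * p)%nat (ss e)).
  assert (Hb : forall k, y (r + k * p)%nat = param (b k) e /\ 0 < b k < 1).
  { induction k.
    - unfold b. simpl. rewrite Nat.add_0_r, Er, param_at_ss. auto.
    - destruct IHk as [E1 H1].
      destruct (Hcore (r + k * p)%nat) as [e' [x [x' [Hx [Hx' [F1 [F2 _]]]]]]].
      destruct (rep_unique _ _ _ _ _ Hx H1 F1 E1) as [-> ->].
      destruct (Hint (r + S k * p)%nat) as [z [e'' [Hz Ez]]].
      replace (r + k * p + p)%nat with (r + S k * p)%nat in F2 by lia.
      destruct (rep_unique _ _ _ _ _ Hx' Hz F2 Ez) as [<- ->].
      unfold b. rewrite Ez, param_at_ss. split; auto. }
  assert (HN : forall k, NoPB rho d e (b k) (b (S k))).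
  { intros k. destruct (Hb k) as [E1 H1]. destruct (Hb (S k)) as [E2 H2].
    destruct (Hcore (r + k * p)%nat) as [e' [x [x' [Hx [Hx' [F1 [F2 HN']]]]]]].
    destruct (rep_unique _ _ _ _ _ Hx H1 F1 E1) as [-> ->].
    replace (r + k * p + p)%nat with (r + S k * p)%nat in F2 by lia.
    destruct (rep_unique _ _ _ _ _ Hx' H2 F2 E2) as [_ ->]. auto. }
  assert (Hnd : forall k, b k <> d e).
  { intros k E. apply (Hnp (r + k * p)%nat). destruct (Hb k) as [E1 _]. rewrite E1, E. apply dp_inP. }
  pose proof (Hd e) as Hde.
  set (s := if Rlt_dec (b O) (d e) then true else false).
  assert (Hside : forall k, if s then b k < d e else d e < b k).
  { induction k.
    - unfold s. destruct Rlt_dec; auto. pose proof (Hnd O). lra.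
    - pose proof (HN k) as HNk. pose proof (Hnd (S k)).
      assert (~ betw (b k) (b (S k)) (d e)) by (intros Hbt; apply (HNk _ Hbt); apply dp_inP).
      unfold betw in *. destruct s; lra. }
  assert (Hsok : forall k, sideok d e s (b k)) by (intros k; specialize (Hside k); destruct s; simpl; lra).
  assert (Hnext : forall k, y (S r + k * p)%nat = param (nphi rho e s (b k)) (tgt e s)).
  { intros k. destruct (Hb k) as [E1 H1]. pose proof (T (r + k * p)%nat) as St.
    rewrite E1 in St. replace (S (r + k * p)) with (S r + k * p)%nat in St by lia.
    destruct (step_char rho d Hrho Hsum Hd (b k) e _ ltac:(lra) St) as [s' [Hs' ->]].
    assert (s' = s). { specialize (Hside k). destruct s, s'; simpl in *; auto; lra. }
    subst; auto. }
  assert (Hcau : Cauchy_crit b).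
  { apply (geom_cauchy b C (kk rho d)); [lra|auto|].
    intros k. destruct (Hb k) as [E1 H1]. destruct (Hb (S k)) as [E2 H2].
    rewrite <- dist1_param with (i := e). rewrite <- E1, <- E2.
    replace (r + S k * p)%nat with (r + k * p + p)%nat by lia.
    eapply Rle_trans; [apply Hbd|]. apply Rmult_le_compat_l; auto.
    apply pow_dec; [lra|]. nia. }
  destruct (R_complete b Hcau) as [beta Hbeta].
  assert (Hbr : 0 <= beta <= 1).
  { split; [apply (cv_ge_c b); auto; intros k; destruct (Hb k); lra
           |apply (cv_le_c b); auto; intros k; destruct (Hb k); lra]. }
  assert (Hsb : sideok d e s beta).
  { specialize (Hside O). destruct s; simpl.
    - apply (cv_le_c b); auto; intros k; specialize (Hsok k); simpl in Hsok; auto.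
    - apply (cv_ge_c b); auto; intros k; specialize (Hsok k); simpl in Hsok; auto. }
  exists (param beta e), (param (nphi rho e s beta) (tgt e s)). split; [|split].
  - apply Un_cv_ext with (fun k => Rabs (b k - beta)).
    + intros k. destruct (Hb k) as [E1 _]. rewrite E1, dist1_param. auto.
    + intros eps He. destruct (Hbeta eps He) as [N HN']. exists N. intros n Hn.
      unfold R_dist in *. rewrite Rminus_0_r, Rabs_Rabsolu. auto.
  - destruct (nphi_lip rho Hrho Hsum e s) as [Lc [HLc Hlip]].
    apply cv0_le with (fun k => Lc * Rabs (b k - beta)).
    + apply cv_lip; auto.
    + intros k. split; [apply dist1_nonneg|]. rewrite Hnext, dist1_param.
      destruct (Hb k). apply Hlip; lra.
  - apply step_exists; auto.
Qed.

End LIM.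


Section P1a.
Variables rho d : idx -> R.
Hypothesis Hrho : forall i, 0 < rho i < 1.
Hypothesis Hsum : rho I1 + rho I2 + rho I3 > 1.
Hypothesis Hd : forall i, 0 < d i < 1.

Lemma back_shift tr a b : Trajectory rho d tr -> tr a = tr b -> (a <= b)%nat ->
  forall x, (x <= a)%nat -> tr x = tr (x + (b - a))%nat.
Proof.
  intros T E Hab.
  assert (forall k, (k <= a)%nat -> tr (a - k)%nat = tr (b - k)%nat).
  { induction k; intros Hk.
    - rewrite !Nat.sub_0_r. auto.
    - pose proof (T (a - S k)%nat) as S1. pose proof (T (b - S k)%nat) as S2.
      replace (S (a - S k)) with (a - k)%nat in S1 by lia.
      replace (S (b - S k)) with (b - k)%nat in S2 by lia.
      rewrite IHk in S1 by lia. apply (back_inj rho d Hrho Hsum Hd _ _ _ S1 S2). }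
  intros x Hx. specialize (H (a - x)%nat ltac:(lia)).
  replace (a - (a - x))%nat with x in H by lia. rewrite H. f_equal. lia.
Qed.

Lemma allP_periodic tr (Lp : list pt) : Trajectory rho d tr ->
  (forall t, In (tr t) Lp) ->
  exists q, (1 <= q)%nat /\ forall x, tr x = tr (x + q)%nat.
Proof.
  intros T HL. set (N := length Lp).
  assert (HT : forall T0, exists q, (1 <= q <= N)%nat /\ forall x, (x <= T0)%nat -> tr x = tr (x + q)%nat).
  { intros T0. destruct (pigeon pt tr Lp T0 (fun k _ => HL k)) as [a [b [H1 [H2 [H3 E]]]]].
    exists (b - a)%nat. split; [unfold N; lia|].
    intros x Hx. apply (back_shift tr a b T E ltac:(lia) x ltac:(lia)). }
  apply NNPP. intros Hno.
  assert (Hq : forall q, exists x, (1 <= q <= N)%nat -> tr x <> tr (x + q)%nat).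
  { intros q. apply NNPP. intros Hn. apply Hno. exists q.
    destruct (Nat.le_gt_cases 1 q) as [H1|H1]; [|apply NNPP; intros _; apply Hn; exists O; lia].
    split; auto. intros x. apply NNPP. intros Hx. apply Hn. exists x. intros Hqr.
    exact Hx. }
  assert (Hb : forall n, exists M, forall q, (q <= n)%nat -> exists x, (x <= M)%nat /\ ((1 <= q <= N)%nat -> tr x <> tr (x + q)%nat)).
  { induction n.
    - destruct (Hq O) as [x Hx]. exists x. intros q Hqn. exists x. split; auto.
      intros Hr. lia.
    - destruct IHn as [M HM]. destruct (Hq (S n)) as [x Hx]. exists (Nat.max M x).
      intros q Hqn. destruct (Nat.eq_dec q (S n)) as [->|Hne].
      + exists x. split; auto. lia.
      + destruct (HM q ltac:(lia)) as [y [Hy Hy']]. exists y. split; auto. lia. }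
  destruct (Hb N) as [M HM]. destruct (HT M) as [q [Hq1 Hq2]].
  destruct (HM q ltac:(lia)) as [x [Hx Hx']]. apply (Hx' Hq1). apply Hq2. auto.
Qed.

Lemma periodic_conv tr q : Trajectory rho d tr -> (1 <= q)%nat -> (forall x, tr x = tr (x + q)%nat) ->
  PeriodicOrbit rho d q tr /\ ConvergesOnto tr q tr.
Proof.
  intros T Hq Hp. split.
  - split; auto. split.
    + intros n _. apply T.
    + pose proof (T (q - 1)%nat). replace (S (q - 1)) with (0 + q)%nat in H by lia.
      rewrite <- Hp in H. auto.
  - exists O. intros n Hn.
    assert (forall t, tr (q * t + n + 0)%nat = tr n).
    { induction t. f_equal; lia. rewrite <- IHt.
      replace (q * S t + n + 0)%nat with ((q * t + n + 0) + q)%nat by nia. symmetry. apply Hp. }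
    intros eps He. exists O. intros t _. rewrite H, dist1_refl. unfold R_dist.
    rewrite Rminus_0_r, Rabs_R0. auto.
Qed.

End P1a.


Section P1.
Variables rho d : idx -> R.
Hypothesis Hrho : forall i, 0 < rho i < 1.
Hypothesis Hsum : rho I1 + rho I2 + rho I3 > 1.
Hypothesis Hd : forall i, 0 < d i < 1.

Lemma traj_interior tr t : Trajectory rho d tr -> (1 <= t)%nat ->
  exists x e, 0 < x < 1 /\ tr t = param x e.
Proof.
  intros T Ht. pose proof (T (t - 1)%nat) as S1. replace (S (t - 1)) with t in S1 by lia.
  exact (step_tgt rho d Hrho Hsum Hd _ _ S1).
Qed.

Lemma caseB tr Lp t0 : Trajectory rho d tr -> (forall p, InP rho d p -> In p Lp) ->
  ~ InP rho d (tr t0) -> exists m u, PeriodicOrbit rho d m u /\ ConvergesOnto tr m u.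
Proof.
  intros T HL Ht0.
  assert (Hnp : forall t, (t0 <= t)%nat -> ~ InP rho d (tr t)).
  { intros t Ht HP. apply Ht0. apply (inP_traj rho d Hrho Hsum Hd tr t0 (t - t0)); auto.
    replace (t0 + (t - t0))%nat with t by lia. auto. }
  set (N := length Lp).
  destruct (pigeon nat (fun k => key Lp (tr k)) (seq 0 (3 * S N)) (S t0)) as [a [b [H1 [H2 [H3 Ek]]]]].
  { intros k _. apply in_seq. pose proof (key_bound Lp (tr k)). unfold N in *. lia. }
  destruct (traj_interior tr a T ltac:(lia)) as [xa [ea [Hxa Ea]]].
  destruct (traj_interior tr b T ltac:(lia)) as [xb [eb [Hxb Eb]]].
  rewrite Ea, Eb in Ek.
  destruct (key_NoPB rho d Lp xa xb ea eb HL Hxa Hxb ltac:(rewrite <- Ea; apply Hnp; lia)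
              ltac:(rewrite <- Eb; apply Hnp; lia) Ek) as [-> HN].
  set (p := (b - a)%nat).
  set (y := fun n => tr (a + n)%nat).
  set (y' := fun n => tr (b + n)%nat).
  assert (Ty : Trajectory rho d y).
  { intros n. unfold y. replace (a + S n)%nat with (S (a + n)) by lia. apply T. }
  assert (Ty' : Trajectory rho d y').
  { intros n. unfold y'. replace (b + S n)%nat with (S (b + n)) by lia. apply T. }
  assert (Eyy : forall n, y' n = y (n + p)%nat).
  { intros n. unfold y, y', p. f_equal. lia. }
  assert (Ey0 : y O = param xa ea) by (unfold y; rewrite Nat.add_0_r; auto).
  assert (Ey0' : y' O = param xb ea) by (unfold y'; rewrite Nat.add_0_r; auto).
  pose proof (core_iter rho d Hrho Hsum Hd y y' xa xb ea Ty Ty' Ey0 Ey0' ltac:(lra) ltac:(lra) HN) as CI.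
  destruct (decay_bound rho d Hrho Hsum Hd y y' xa xb ea Ty Ty' Ey0 Ey0' ltac:(lra) ltac:(lra) HN)
    as [C [HC Hbd]].
  assert (HLim := limit_lemma rho d Hrho Hsum Hd y p C Ty ltac:(unfold p; lia) HC).
  assert (HLim' : forall r, exists v w, Un_cv (fun k => dist1 (y (r + k * p)%nat) v) 0 /\
    Un_cv (fun k => dist1 (y (S r + k * p)%nat) w) 0 /\ Step rho d v w).
  { apply HLim.
    - intros n. unfold y. apply Hnp. lia.
    - intros n. unfold y. apply traj_interior; auto. lia.
    - intros n. destruct (CI n) as [e [x [x' [Hx [Hx' [F1 [F2 [HN' _]]]]]]]].
      exists e, x, x'. repeat split; auto; try lra. rewrite <- Eyy. auto.
    - intros n. rewrite <- Eyy. auto. }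
  assert (Hex : forall r, exists v, Un_cv (fun k => dist1 (y (r + k * p)%nat) v) 0).
  { intros r. destruct (HLim' r) as [v [w [Hv _]]]. exists v. auto. }
  set (V := fun r => proj1_sig (constructive_indefinite_description _ (Hex r))).
  assert (HV : forall r, Un_cv (fun k => dist1 (y (r + k * p)%nat) (V r)) 0).
  { intros r. unfold V. destruct constructive_indefinite_description; auto. }
  assert (HStep : forall r, Step rho d (V r) (V (S r))).
  { intros r. destruct (HLim' r) as [v [w [Hv [Hw Hs]]]].
    rewrite (lim_unique _ _ _ (HV r) Hv), (lim_unique _ _ _ (HV (S r)) Hw). auto. }
  assert (HVp : V p = V O).
  { apply (lim_unique (fun k => y (0 + k * p)%nat)); [|apply HV].
    apply cv0_shift. apply Un_cv_ext with (fun k => dist1 (y (p + k * p)%nat) (V p)); [|apply HV].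
    intros k. reflexivity. }
  exists p, V. split.
  - split; [unfold p; lia|]. split.
    + intros n _. apply HStep.
    + pose proof (HStep (p - 1)%nat). replace (S (p - 1)) with p in H by (unfold p in *; lia).
      rewrite HVp in H. auto.
  - exists a. intros n Hn. apply Un_cv_ext with (fun k => dist1 (y (n + k * p)%nat) (V n)); [|apply HV].
    intros k. unfold y. f_equal. f_equal. lia.
Qed.

Lemma part1b (Lp : list pt) : (forall p, InP rho d p -> In p Lp) ->
  forall tr, Trajectory rho d tr -> exists m u, PeriodicOrbit rho d m u /\ ConvergesOnto tr m u.
Proof.
  intros HL tr T. destruct (classic (forall t, InP rho d (tr t))) as [Hall|Hn].
  - destruct (allP_periodic rho d Hrho Hsum Hd tr Lp T (fun t => HL _ (Hall t))) as [q [Hq Hp]].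
    exists q, tr. apply periodic_conv; auto.
  - apply not_all_ex_not in Hn. destruct Hn as [t0 Ht0]. apply (caseB tr Lp t0); auto.
Qed.

End P1.


Section P1c.
Variables rho d : idx -> R.
Hypothesis Hrho : forall i, 0 < rho i < 1.
Hypothesis Hsum : rho I1 + rho I2 + rho I3 > 1.
Hypothesis Hd : forall i, 0 < d i < 1.

Definition Per (v : pt) := exists m u n, PeriodicOrbit rho d m u /\ (n < m)%nat /\ u n = v.

Lemma per_interior m u n : PeriodicOrbit rho d m u -> (n < m)%nat ->
  exists x e, 0 < x < 1 /\ u n = param x e.
Proof.
  intros [Hm [Hs Hl]] Hn. destruct n.
  - exact (step_tgt rho d Hrho Hsum Hd _ _ Hl).
  - exact (step_tgt rho d Hrho Hsum Hd _ _ (Hs n Hn)).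
Qed.

Lemma orb_idx m u n t : PeriodicOrbit rho d m u -> (n < m)%nat ->
  exists x e, 0 < x < 1 /\ u ((n + t) mod m)%nat = param x e.
Proof.
  intros Hpo Hn. apply (per_interior m u); auto.
  destruct Hpo as [Hm _]. apply Nat.mod_upper_bound. lia.
Qed.

Lemma per_eq m u n m' u' n' a b e :
  PeriodicOrbit rho d m u -> (n < m)%nat -> PeriodicOrbit rho d m' u' -> (n' < m')%nat ->
  u n = param a e -> u' n' = param b e -> 0 < a < 1 -> 0 < b < 1 -> NoPB rho d e a b ->
  a = b.
Proof.
  intros P1 Hn P2 Hn' E1 E2 Ha Hb HN.
  set (tv := fun t => u ((n + t) mod m)%nat).
  set (tw := fun t => u' ((n' + t) mod m')%nat).
  pose proof (orbit_traj rho d m u n P1 Hn) as Tv.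
  pose proof (orbit_traj rho d m' u' n' P2 Hn') as Tw.
  assert (Ev : tv O = param a e) by (unfold tv; rewrite Nat.add_0_r, Nat.mod_small; auto).
  assert (Ew : tw O = param b e) by (unfold tw; rewrite Nat.add_0_r, Nat.mod_small; auto).
  pose proof (core_iter rho d Hrho Hsum Hd tv tw a b e Tv Tw Ev Ew ltac:(lra) ltac:(lra) HN) as CI.
  pose proof (kk_range rho d Hrho Hd) as Hkk.
  assert (Hdec : forall t, Ept (tv t) (tw t) <= Ex a b * (kk rho d * kk rho d) ^ t).
  { induction t.
    - rewrite Ev, Ew, Ept_param by auto. simpl. lra.
    - destruct (CI t) as [e' [x [y [Hx [Hy [F1 [F2 [HN' _]]]]]]]].
      destruct (orb_idx m u n t P1 Hn) as [x1 [e1 [Hx1 G1]]].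
      destruct (orb_idx m' u' n' t P2 Hn') as [y1 [e2 [Hy1 G2]]].
      fold tv in G1. fold tw in G2.
      destruct (rep_unique _ _ _ _ _ Hx Hx1 F1 G1) as [_ <-].
      destruct (rep_unique _ _ _ _ _ Hy Hy1 F2 G2) as [_ <-].
      pose proof (contr_step rho d Hrho Hsum Hd tv tw e' x y t Tv Tw F1 F2 Hx1 Hy1 HN').
      assert (0 <= kk rho d * kk rho d) by nra.
      simpl. nra. }
  set (T := (m * m')%nat).
  assert (HT1 : tv T = param a e).
  { unfold tv, T. rewrite <- E1. f_equal. rewrite Nat.mul_comm, Nat.Div0.mod_add. apply Nat.mod_small; auto. }
  assert (HT2 : tw T = param b e).
  { unfold tw, T. rewrite <- E2. f_equal. rewrite Nat.Div0.mod_add. apply Nat.mod_small; auto. }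
  specialize (Hdec T). rewrite HT1, HT2, Ept_param in Hdec by auto.
  assert (Hq : (kk rho d * kk rho d) ^ T < 1).
  { apply pow_lt1; [nra|]. unfold T. nia. }
  pose proof (Ex_nonneg a b Ha Hb). pose proof (Ex_ge a b Ha Hb).
  assert (Ex a b <= 0) by nra.
  assert ((a - b) ^ 2 = 0) by (pose proof (pow2_ge_0 (a - b)); lra).
  assert ((a - b) * (a - b) = 0) by (simpl in H2; lra).
  apply Rmult_integral in H3. lra.
Qed.

Lemma part1a (Lp : list pt) : (forall p, InP rho d p -> In p Lp) ->
  exists L : list pt, forall m u, PeriodicOrbit rho d m u -> forall n, (n < m)%nat -> In (u n) L.
Proof.
  intros HL.
  set (pick := fun k : nat =>
    match excluded_middle_informative (exists v, Per v /\ ~ InP rho d v /\ key Lp v = k) with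
    | left H => proj1_sig (constructive_indefinite_description _ H)
    | right _ => fun _ : idx => 0
    end).
  exists (Lp ++ map pick (seq 0 (3 * S (length Lp)))).
  intros m u Hpo n Hn. apply in_or_app.
  destruct (classic (InP rho d (u n))) as [HP|HP]; [left; auto|right].
  apply in_map_iff. exists (key Lp (u n)). split.
  2:{ apply in_seq. pose proof (key_bound Lp (u n)). lia. }
  unfold pick. destruct excluded_middle_informative as [Hx|Hx].
  2:{ exfalso. apply Hx. exists (u n). split; [exists m, u, n; auto|]. auto. }
  destruct constructive_indefinite_description as [v [[m' [u' [n' [Hpo' [Hn' Ev]]]]] [Hv Hk]]].
  simpl. subst v.
  destruct (per_interior m u n Hpo Hn) as [a [e [Ha Ea]]].
  destruct (per_interior m' u' n' Hpo' Hn') as [b [e' [Hb Eb]]].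
  rewrite Ea, Eb in Hk.
  destruct (key_NoPB rho d Lp b a e' e HL Hb Ha ltac:(rewrite <- Eb; auto) ltac:(rewrite <- Ea; auto) Hk)
    as [-> HN].
  assert (b = a) by (apply (per_eq m' u' n' m u n b a e'); auto).
  subst. congruence.
Qed.

End P1c.

Theorem lemma4p7 (rho d : idx -> R)
  (Hrho : forall i, 0 < rho i < 1)
  (Hsum : rho I1 + rho I2 + rho I3 > 1)
  (Hd : forall i, 0 < d i < 1) :
  (* (i) *)
  (FiniteP rho d ->
     (exists L : list pt, forall m u, PeriodicOrbit rho d m u ->
        forall n, (n < m)%nat -> In (u n) L) /\
     (forall tr, Trajectory rho d tr ->
        exists m u, PeriodicOrbit rho d m u /\ ConvergesOnto tr m u))
  /\
  (* (ii) *)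
  (forall z m u tr,
     PeriodicOrbit rho d m u -> ~ InClosureP rho d z ->
     Trajectory rho d tr -> tr O = z -> ConvergesOnto tr m u ->
     exists eps, 0 < eps /\ forall z', Nbhd eps z z' ->
       (exists tr', Trajectory rho d tr' /\ tr' O = z') /\
       (forall tr1 tr2, Trajectory rho d tr1 -> tr1 O = z' ->
          Trajectory rho d tr2 -> tr2 O = z' -> forall t, tr1 t = tr2 t) /\
       (forall tr', Trajectory rho d tr' -> tr' O = z' -> ConvergesOnto tr' m u))
  /\
  (* (iii) *)
  (forall m u, PeriodicOrbit rho d m u ->
     (forall n, (n < m)%nat -> ~ InClosureP rho d (u n)) ->
     Stable rho d m u).
Proof.
  split; [|split].
  - intros [Lp HL]. split.
    + exact (part1a rho d Hrho Hsum Hd Lp HL).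
    + exact (part1b rho d Hrho Hsum Hd Lp HL).
  - exact (part2 rho d Hrho Hsum Hd).
  - exact (part3 rho d Hrho Hsum Hd).
Qed.
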